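(* Let $f:\mathbb{R}\to\mathbb{R}$ be sufficiently smooth with a simple root $\alpha$ ($f(\alpha)=0$, $f'(\alpha)\ne0$). For $s\ge 1$, consider the Adams–Bashforth root-finder $$x_{n+s}=x_{n+s-1}+h_{n+s}\sum_{k=0}^{s-1}b_k^{(n)}F(x_{n+k}),\qquad F(x)=\frac{1}{f'(x)},\quad h_{n+s}=-f(x_{n+s-1}),$$ whose coefficients $b_k^{(n)}$ are chosen to maximise the order of convergence (equivalently, $x_{n+s}=H(0)$ where $H$ is the polynomial of degree at most $s$ with $H(f(x_{n+s-1}))=x_{n+s-1}$ and $H'(f(x_{n+k}))=1/f'(x_{n+k})$ for $k=0,\dots,s-1$; for $s=1$ this is Newton's method). Then the convergence rate $p$ is the largest real root of $$p^{s+1}-3p^s+p^{s-1}+1=0,$$ it satisfies $p<\frac{3+\sqrt5}{2}$, and the rates form a monotonically increasing sequence in $s$ with $p\to\frac{3+\sqrt5}{2}$ as $s\to\infty$.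
   Context: Writing $\varepsilon_l=x_l-\alpha$, the convergence rate is the number $p$ such that $|\varepsilon_{l+1}|=C|\varepsilon_l|^p$ asymptotically as $l\to\infty$ for some constant $C>0$.
   Formalization: The rate p is claimed only when the (s+1)-th derivative at 0 of the local inverse of f (with value α at 0) is nonzero, for starting values close enough to α, with f infinitely differentiable. Apart from conventions, each condition added here is assumed in the paper as well or is needed for the statement above to hold. *)

(* Defs.v *)
From Stdlib Require Import Reals.
From Coquelicot Require Import Coquelicot.
Open Scope R_scope.

Definition smooth (f : R -> R) : Prop :=
  forall (n : nat) (x : R), ex_derive_n f n x.

Definition poly_eval (c : nat -> R) (s : nat) (t : R) : R :=
  sum_f_R0 (fun j => c j * t ^ j) s.

(* One step of the s-step Adams–Bashforth root-finder, in its
   interpolation form: x_(n+s) = H(0), where H has degree <= s,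
   H(f(x_(n+s-1))) = x_(n+s-1) and H'(f(x_(n+k))) = 1/f'(x_(n+k)),
   k = 0, ..., s-1. *)
Definition AB_next (f : R -> R) (s : nat) (x : nat -> R) (n : nat) : Prop :=
  exists c : nat -> R,
    poly_eval c s (f (x (n + s - 1)%nat)) = x (n + s - 1)%nat /\
    (forall k : nat, (k < s)%nat ->
        Derive (poly_eval c s) (f (x (n + k)%nat)) = / Derive f (x (n + k)%nat)) /\
    x (n + s)%nat = poly_eval c s 0.

Definition AB_sequence (f : R -> R) (s : nat) (x : nat -> R) : Prop :=
  forall n : nat, AB_next f s x n.

Definition has_convergence_rate (x : nat -> R) (alpha p : R) : Prop :=
  is_lim_seq x alpha /\
  exists C : R, 0 < C /\
    is_lim_seq (fun l => Rabs (x (S l) - alpha) / Rpower (Rabs (x l - alpha)) p) C.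

Definition rate_poly (s : nat) (p : R) : R :=
  p ^ (S s) - 3 * p ^ s + p ^ (s - 1) + 1.

(* Genericity: the (s+1)-th derivative at 0 of the local inverse
   f^{-1} (near 0, with f^{-1}(0) = alpha) is nonzero. *)
Definition inverse_nondegenerate (f : R -> R) (alpha : R) (s : nat) : Prop :=
  exists (g : R -> R) (r : R), 0 < r /\ g 0 = alpha /\
    (forall y, Rabs y < r -> f (g y) = y /\ continuous g y) /\
    Derive_n g (S s) 0 <> 0.

(* Main.v *)
Require Import Defs.
From Stdlib Require Import Reals Lra Lia Classical.
From Coquelicot Require Import Coquelicot.
Open Scope R_scope.

Lemma exd_cont (f : R -> R) x : ex_derive f x -> continuous f x.
Proof. intros H. exact (@ex_derive_continuous R_AbsRing R_NormedModule f x H). Qed.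

Definition openD (D : R -> Prop) := forall x, D x -> locally x D.

Fixpoint Cn (n : nat) (f : R -> R) (D : R -> Prop) : Prop :=
  match n with
  | O => forall x, D x -> continuous f x
  | S m => (forall x, D x -> ex_derive f x) /\ Cn m (Derive f) D
  end.

Lemma loc_eq (D : R -> Prop) (f g : R -> R) x :
  openD D -> (forall y, D y -> f y = g y) -> D x -> locally x (fun y => f y = g y).
Proof.
  intros HD Hfg Hx. destruct (HD x Hx) as [e He]. exists e. intros y Hy. apply Hfg, He, Hy.
Qed.

Lemma Cn_ext n : forall f g D, openD D -> (forall x, D x -> f x = g x) -> Cn n f D -> Cn n g D.
Proof.
  induction n as [|n IH]; intros f g D HD Hfg H; simpl in *.
  - intros x Hx. apply continuous_ext_loc with f; [|now apply H].
    apply (loc_eq D f g x HD Hfg Hx).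
  - destruct H as [H1 H2]. split.
    + intros x Hx. apply ex_derive_ext_loc with f; [apply (loc_eq D f g x HD Hfg Hx)|now apply H1].
    + apply IH with (Derive f); auto.
      intros x Hx. apply Derive_ext_loc. apply (loc_eq D f g x HD Hfg Hx).
Qed.

Lemma Cn_S_le n : forall f D, Cn (S n) f D -> Cn n f D.
Proof.
  induction n as [|n IH]; intros f D H.
  - simpl in *. destruct H as [H1 _]. intros x Hx. apply exd_cont, H1, Hx.
  - destruct H as [H1 H2]. split; auto.
Qed.

Lemma Cn_le m n f D : (m <= n)%nat -> Cn n f D -> Cn m f D.
Proof.
  induction 1; auto. intros H0. apply IHle. now apply Cn_S_le.
Qed.

Lemma Cn_der n f D : Cn (S n) f D -> forall x, D x -> ex_derive f x.
Proof. intros [H _]; auto. Qed.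

Lemma Cn_cont n f D : Cn n f D -> forall x, D x -> continuous f x.
Proof.
  intros H. apply (Cn_le 0 n) in H; [|lia]. exact H.
Qed.

Lemma Cn_const n : forall c D, openD D -> Cn n (fun _ => c) D.
Proof.
  induction n as [|n IH]; intros c D HD; simpl.
  - intros; apply continuous_const.
  - split. intros; apply ex_derive_const.
    apply Cn_ext with (fun _ => 0); auto. intros; now rewrite Derive_const.
Qed.

Lemma Cn_plus n : forall f g D, openD D -> Cn n f D -> Cn n g D -> Cn n (fun x => f x + g x) D.
Proof.
  induction n as [|n IH]; intros f g D HD Hf Hg; simpl in *.
  - intros x Hx. apply (continuous_plus f g); auto.
  - destruct Hf as [Hf1 Hf2], Hg as [Hg1 Hg2]. split.
    + intros x Hx. apply (ex_derive_plus f g); auto.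
    + apply Cn_ext with (fun x => Derive f x + Derive g x); auto.
      intros x Hx. rewrite Derive_plus; auto.
Qed.

Lemma Cn_scal n : forall c f D, openD D -> Cn n f D -> Cn n (fun x => c * f x) D.
Proof.
  induction n as [|n IH]; intros c f D HD Hf; simpl in *.
  - intros x Hx. apply (continuous_mult (fun _ => c) f); auto. apply continuous_const.
  - destruct Hf as [Hf1 Hf2]. split.
    + intros x Hx. apply ex_derive_scal; auto.
    + apply Cn_ext with (fun x => c * Derive f x); auto.
      intros x Hx. rewrite Derive_scal; auto.
Qed.

Lemma Cn_opp n f D : openD D -> Cn n f D -> Cn n (fun x => - f x) D.
Proof.
  intros HD H. apply Cn_ext with (fun x => (-1) * f x); auto. intros; ring.
  apply Cn_scal; auto.
Qed.

Lemma Cn_minus n f g D : openD D -> Cn n f D -> Cn n g D -> Cn n (fun x => f x - g x) D.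
Proof.
  intros HD Hf Hg. apply Cn_plus; auto. apply Cn_opp; auto.
Qed.

Lemma Cn_mult n : forall f g D, openD D -> Cn n f D -> Cn n g D -> Cn n (fun x => f x * g x) D.
Proof.
  induction n as [|n IH]; intros f g D HD Hf Hg.
  - simpl in *. intros x Hx. apply (continuous_mult f g); auto.
  - pose proof (Cn_S_le _ _ _ Hf) as Hf'. pose proof (Cn_S_le _ _ _ Hg) as Hg'.
    destruct Hf as [Hf1 Hf2], Hg as [Hg1 Hg2]. split.
    + intros x Hx. apply ex_derive_mult; auto.
    + apply Cn_ext with (fun x => Derive f x * g x + f x * Derive g x); auto.
      intros x Hx. rewrite Derive_mult; auto.
      apply Cn_plus; auto.
Qed.

Lemma Cn_comp n : forall f g D E, openD D -> openD E -> Cn n f E -> Cn n g D ->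
  (forall x, D x -> E (g x)) -> Cn n (fun x => f (g x)) D.
Proof.
  induction n as [|n IH]; intros f g D E HD HE Hf Hg HgE.
  - simpl in *. intros x Hx. apply continuous_comp; auto.
  - pose proof (Cn_S_le _ _ _ Hf) as Hf'. pose proof (Cn_S_le _ _ _ Hg) as Hg'.
    destruct Hf as [Hf1 Hf2], Hg as [Hg1 Hg2]. split.
    + intros x Hx. apply ex_derive_comp; auto.
    + apply Cn_ext with (fun x => Derive f (g x) * Derive g x); auto.
      intros x Hx. rewrite (Derive_comp f g x); [ring|apply Hf1, HgE, Hx|apply Hg1, Hx].
      apply Cn_mult; auto. apply IH with E; auto.
Qed.

Lemma openD_neq0 : openD (fun x => x <> 0).
Proof.
  intros x Hx. assert (He : 0 < Rabs x) by (apply Rabs_pos_lt; auto).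
  exists (mkposreal _ He). intros y Hy. cbn in Hy. unfold AbsRing_ball, abs, minus, plus, opp in Hy; simpl in Hy.
  intro H0. subst y. rewrite Rplus_0_l, Rabs_Ropp in Hy. lra.
Qed.

Lemma Cn_inv n : Cn n Rinv (fun x => x <> 0).
Proof.
  induction n as [|n IH]; simpl.
  - intros x Hx. apply exd_cont. apply (ex_derive_Reals_1 Rinv).
    apply derivable_pt_inv. auto. apply derivable_pt_id.
  - split.
    + intros x Hx. apply (ex_derive_Reals_1 Rinv).
      apply (derivable_pt_inv id); auto. apply derivable_pt_id.
    + apply Cn_ext with (fun x => - (/ x * / x)). apply openD_neq0.
      intros x Hx. symmetry. apply is_derive_unique.
      auto_derive; auto. field; auto.
      apply Cn_opp. apply openD_neq0. apply Cn_mult; auto. apply openD_neq0.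
Qed.

Lemma Cn_id n D : openD D -> Cn n (fun x => x) D.
Proof.
  destruct n as [|n]; intros HD; simpl.
  - intros; apply continuous_id.
  - split. intros; apply ex_derive_id.
    apply Cn_ext with (fun _ => 1); auto. intros. symmetry. apply (Derive_id x).
    apply Cn_const; auto.
Qed.

Definition smooth' (f : R -> R) : Prop := forall (n : nat) (x : R), ex_derive_n f n x.

Lemma smooth_Cn f : smooth' f -> forall n k D, Cn n (Derive_n f k) D.
Proof.
  intros Hf n. induction n as [|n IH]; intros k D; simpl.
  - intros x _. apply exd_cont. apply (Hf (S k) x).
  - split. intros x _. apply (Hf (S k) x). apply (IH (S k)).
Qed.

Lemma Cn_Derive_n k : forall m f D, openD D -> Cn (k + m) f D -> Cn m (Derive_n f k) D.
Proof.
  induction k as [|k IH]; intros m f D HD H; simpl in *; auto.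
  destruct H as [_ H]. apply IH in H; auto.
  apply Cn_ext with (Derive_n (Derive f) k); auto.
  intros x _. rewrite (Derive_n_comp f k 1). rewrite Nat.add_1_r. reflexivity.
Qed.

Lemma Derive_n_minus_D n : forall f g D, openD D -> Cn n f D -> Cn n g D ->
  forall x, D x -> Derive_n (fun y => f y - g y) n x = Derive_n f n x - Derive_n g n x.
Proof.
  induction n as [|n IH]; intros f g D HD Hf Hg x Hx; [reflexivity|].
  destruct Hf as [Hf1 Hf2], Hg as [Hg1 Hg2].
  assert (E : forall h, Derive_n h (S n) x = Derive_n (Derive h) n x).
  { intros h. rewrite (Derive_n_comp h n 1), Nat.add_1_r. reflexivity. }
  rewrite !E. rewrite <- (IH (Derive f) (Derive g) D); auto.
  apply Derive_n_ext_loc. simpl.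
  apply (loc_eq D); auto. intros y Hy. apply Derive_minus; auto.
Qed.

Fixpoint PolyD (d : nat) (a : R) (f : R -> R) : Prop :=
  match d with
  | O => forall t, f t = a
  | S d' => (forall t, ex_derive f t) /\ PolyD d' (INR (S d') * a) (Derive f)
  end.

Lemma PolyD_ext d : forall a f g, (forall t, f t = g t) -> PolyD d a f -> PolyD d a g.
Proof.
  induction d as [|d IH]; intros a f g Hfg H.
  - simpl in *. intros t. rewrite <- Hfg. auto.
  - destruct H as [H1 H2]. split.
    + intros t. apply ex_derive_ext with f; auto.
    + apply IH with (Derive f); auto. intros t. apply Derive_ext; auto.
Qed.

Lemma PolyD_plus d : forall a b f g, PolyD d a f -> PolyD d b g -> PolyD d (a + b) (fun t => f t + g t).
Proof.
  induction d as [|d IH]; intros a b f g Hf Hg.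
  - simpl in *. intros t. rewrite Hf, Hg. auto.
  - destruct Hf as [Hf1 Hf2], Hg as [Hg1 Hg2]. split.
    + intros t. apply (ex_derive_plus f g); auto.
    + apply PolyD_ext with (fun t => Derive f t + Derive g t).
      intros t. rewrite Derive_plus; auto.
      rewrite Rmult_plus_distr_l. apply IH; auto.
Qed.

Lemma PolyD_scal d : forall c a f, PolyD d a f -> PolyD d (c * a) (fun t => c * f t).
Proof.
  induction d as [|d IH]; intros c a f Hf.
  - simpl in *. intros t. rewrite Hf. auto.
  - destruct Hf as [Hf1 Hf2]. split.
    + intros t. apply ex_derive_scal; auto.
    + apply PolyD_ext with (fun t => c * Derive f t).
      intros t. rewrite Derive_scal; auto.
      replace (INR (S d) * (c * a)) with (c * (INR (S d) * a)) by ring. apply IH; auto.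
Qed.

Lemma PolyD_lift d : forall a f, PolyD d a f -> PolyD (S d) 0 f.
Proof.
  induction d as [|d IH]; intros a f Hf.
  - simpl in *. split.
    + intros t. apply ex_derive_ext with (fun _ => a). intros; auto. apply ex_derive_const.
    + intros t. rewrite Rmult_0_r. rewrite (Derive_ext f (fun _ => a)); auto. apply Derive_const.
  - destruct Hf as [Hf1 Hf2]. split; auto.
    rewrite Rmult_0_r. apply IH in Hf2. exact Hf2.
Qed.

Lemma PolyD_ex_derive d a f : PolyD d a f -> forall t, ex_derive f t.
Proof.
  intros H. apply PolyD_lift in H. destruct H as [H _]. exact H.
Qed.

Lemma PolyD_mul_lin m : forall a u y, PolyD m a u -> PolyD (S m) a (fun t => u t * (t - y)).
Proof.
  induction m as [|m IH]; intros a u y Hu.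
  - assert (Hd : forall t, ex_derive u t) by (apply PolyD_ex_derive with 0%nat a; auto).
    simpl in *. split.
    + intros t. apply ex_derive_mult; auto. auto_derive; auto.
    + intros t. rewrite Derive_mult; auto. 2: auto_derive; auto.
      rewrite (Derive_ext u (fun _ => a)); auto. rewrite Derive_const.
      rewrite Derive_minus. rewrite Derive_id, Derive_const. rewrite Hu. ring.
      apply ex_derive_id. apply ex_derive_const.
  - pose proof Hu as Hu0. destruct Hu as [Hu1 Hu2]. split.
    + intros t. apply ex_derive_mult; auto. auto_derive; auto.
    + apply PolyD_ext with (fun t => Derive u t * (t - y) + u t).
      intros t. rewrite Derive_mult; auto. 2: auto_derive; auto.
      rewrite Derive_minus. rewrite Derive_id, Derive_const. ring.
      apply ex_derive_id. apply ex_derive_const.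
      replace (INR (S (S m)) * a) with (INR (S m) * a + a) by (rewrite (S_INR (S m)); ring).
      apply PolyD_plus; auto.
Qed.

Lemma Derive_n_PolyD d : forall a f t, PolyD d a f -> Derive_n f d t = INR (Factorial.fact d) * a.
Proof.
  induction d as [|d IH]; intros a f t Hf.
  - simpl in *. rewrite Hf. ring.
  - destruct Hf as [Hf1 Hf2].
    replace (Derive_n f (S d) t) with (Derive_n (Derive f) d t)
      by (rewrite (Derive_n_comp f d 1), Nat.add_1_r; reflexivity).
    rewrite (IH _ _ t Hf2). rewrite fact_simpl, mult_INR. ring.
Qed.

Lemma PolyD_Cn n : forall d a f D, openD D -> PolyD d a f -> Cn n f D.
Proof.
  induction n as [|n IH]; intros d a f D HD Hf; apply PolyD_lift in Hf; destruct Hf as [Hf1 Hf2].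
  - intros x _. apply exd_cont. auto.
  - split. intros; auto. apply IH with d (INR (S d) * 0); auto.
Qed.

Lemma PolyD_pow k : PolyD k 1 (fun t => t ^ k).
Proof.
  induction k as [|k IH].
  - simpl. intros; auto.
  - apply PolyD_ext with (fun t => t ^ k * (t - 0)).
    intros t. simpl. ring. apply PolyD_mul_lin; auto.
Qed.


Lemma PolyD_poly_eval s : forall c, PolyD s (c s) (poly_eval c s).
Proof.
  induction s as [|s IH]; intros c.
  - simpl. intros t. unfold poly_eval. simpl. ring.
  - apply PolyD_ext with (fun t => poly_eval c s t + c (S s) * t ^ (S s)).
    intros t. unfold poly_eval. simpl. ring.
    replace (c (S s)) with (0 + c (S s) * 1) at 1 by ring.
    apply PolyD_plus. apply PolyD_lift with (c s). apply IH.
    apply PolyD_scal. apply PolyD_pow.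
Qed.

Fixpoint prodf (m : nat) (u : nat -> R) : R :=
  match m with O => 1 | S m' => prodf m' u * u m' end.

Lemma prodf_ext m u v : (forall k, (k < m)%nat -> u k = v k) -> prodf m u = prodf m v.
Proof.
  induction m; simpl; intros H; auto. rewrite IHm, H; auto.
Qed.

Lemma prodf_zero m u j : (j < m)%nat -> u j = 0 -> prodf m u = 0.
Proof.
  induction m; simpl; intros Hj Hu. lia.
  destruct (Nat.eq_dec j m). subst. rewrite Hu. ring.
  rewrite IHm; [ring|lia|auto].
Qed.

Lemma prodf_neq0 m u : (forall k, (k < m)%nat -> u k <> 0) -> prodf m u <> 0.
Proof.
  induction m; simpl; intros H. lra.
  apply Rmult_integral_contrapositive_currified; auto.
Qed.

Lemma PolyD_omega m y : PolyD m 1 (fun t => prodf m (fun k => t - y k)).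
Proof.
  induction m as [|m IH].
  - simpl. auto.
  - simpl. apply (PolyD_mul_lin m 1 _ (y m)) in IH. exact IH.
Qed.

Lemma rolle_C (F : R -> R) a b : a < b -> (forall x, a <= x <= b -> ex_derive F x) ->
  F a = F b -> exists c, a < c < b /\ Derive F c = 0.
Proof.
  intros Hab HF Heq.
  assert (pr1 : forall c, a < c < b -> derivable_pt F c).
  { intros c Hc. apply ex_derive_Reals_0, HF. lra. }
  assert (pr2 : forall c, a < c < b -> derivable_pt id c).
  { intros c Hc. apply derivable_pt_id. }
  destruct (MVT F id a b pr1 pr2 Hab) as [c [P HP]].
  - intros c Hc. apply derivable_continuous_pt, ex_derive_Reals_0, HF; lra.
  - intros c Hc. apply derivable_continuous_pt, derivable_pt_id.
  - exists c. split; auto. rewrite Derive_Reals with (pr := pr1 c P) in HP.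
    rewrite Derive_Reals in HP. rewrite Heq in HP. unfold id in HP.
    replace (Derive (fun x => x) c) with 1 in HP by (symmetry; apply Derive_id).
    assert (b - a <> 0) by lra.
    replace ((F b - F b) * 1) with 0 in HP by ring.
    apply Rmult_integral in HP. destruct HP as [HP|HP]; [lra|]. exact HP.
Qed.

Lemma finite_choice (P : nat -> R -> Prop) m :
  (forall i, (i <= m)%nat -> exists x, P i x) -> exists w : nat -> R, forall i, (i <= m)%nat -> P i (w i).
Proof.
  induction m as [|m IH]; intros H.
  - destruct (H 0%nat (le_n _)) as [x Hx]. exists (fun _ => x). intros i Hi.
    replace i with 0%nat by lia. auto.
  - destruct IH as [w Hw]. intros i Hi; apply H; lia.
    destruct (H (S m) (le_n _)) as [x Hx].
    exists (fun i => if Nat.eq_dec i (S m) then x else w i).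
    intros i Hi. destruct (Nat.eq_dec i (S m)). subst; auto. apply Hw; lia.
Qed.

Lemma gen_rolle (D : R -> Prop) lo hi m : forall F (z : nat -> R), openD D ->
  (forall x, lo <= x <= hi -> D x) -> Cn m F D ->
  (forall i, (i <= m)%nat -> lo <= z i <= hi) ->
  (forall i, (i < m)%nat -> z i < z (S i)) ->
  (forall i, (i <= m)%nat -> F (z i) = 0) ->
  exists xi, lo <= xi <= hi /\ Derive_n F m xi = 0.
Proof.
  induction m as [|m IH]; intros F z HD Hsub HF Hz Hinc Hzero.
  - exists (z 0%nat). split. apply Hz; lia. apply Hzero; lia.
  - destruct HF as [HF1 HF2].
    destruct (finite_choice (fun i c => z i < c < z (S i) /\ Derive F c = 0) m) as [w Hw].
    { intros i Hi. apply rolle_C. apply Hinc; lia.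
      intros x Hx. apply HF1, Hsub. pose proof (Hz i ltac:(lia)). pose proof (Hz (S i) ltac:(lia)). lra.
      rewrite !Hzero; auto; lia. }
    destruct (IH (Derive F) w HD Hsub HF2) as [xi [Hxi1 Hxi2]].
    + intros i Hi. destruct (Hw i Hi) as [[H1 H2] _].
      pose proof (Hz i ltac:(lia)). pose proof (Hz (S i) ltac:(lia)). lra.
    + intros i Hi. destruct (Hw i ltac:(lia)) as [[H1 H2] _]. destruct (Hw (S i) ltac:(lia)) as [[H3 H4] _]. lra.
    + intros i Hi. apply Hw; auto.
    + exists xi. split; auto. rewrite <- Hxi2.
      rewrite (Derive_n_comp F m 1), Nat.add_1_r. reflexivity.
Qed.

Lemma argmax_ex m (z : nat -> R) : exists j, (j <= m)%nat /\ forall i, (i <= m)%nat -> z i <= z j.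
Proof.
  induction m as [|m IH].
  - exists 0%nat. split; auto. intros i Hi. replace i with 0%nat by lia. lra.
  - destruct IH as [j [Hj1 Hj2]]. destruct (Rle_dec (z (S m)) (z j)).
    + exists j. split. lia. intros i Hi. destruct (Nat.eq_dec i (S m)). subst; auto. apply Hj2; lia.
    + exists (S m). split. lia. intros i Hi. destruct (Nat.eq_dec i (S m)). subst; lra.
      pose proof (Hj2 i ltac:(lia)). lra.
Qed.

Lemma sort_ex m : forall z : nat -> R,
  (forall i j, (i <= m)%nat -> (j <= m)%nat -> i <> j -> z i <> z j) ->
  exists w : nat -> R, (forall i, (i < m)%nat -> w i < w (S i)) /\
    (forall i, (i <= m)%nat -> exists j, (j <= m)%nat /\ w i = z j).
Proof.
  induction m as [|m IH]; intros z Hinj.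
  - exists z. split. intros; lia. intros i Hi. exists i. auto.
  - destruct (argmax_ex (S m) z) as [jm [Hjm1 Hjm2]].
    set (z' := fun i => if Nat.eq_dec i jm then z (S m) else z i).
    destruct (IH z') as [w' [Hw1 Hw2]].
    { intros i j Hi Hj Hij. unfold z'.
      destruct (Nat.eq_dec i jm), (Nat.eq_dec j jm); try (subst; lia);
      apply Hinj; lia. }
    exists (fun i => if Nat.eq_dec i (S m) then z jm else w' i). split.
    + intros i Hi. destruct (Nat.eq_dec i (S m)); [lia|].
      destruct (Nat.eq_dec (S i) (S m)).
      * assert (i = m) by lia. subst i.
        destruct (Hw2 m (le_n _)) as [j [Hj Hwj]]. rewrite Hwj. unfold z'.
        destruct (Nat.eq_dec j jm).
        -- pose proof (Hjm2 (S m) (le_n _)). assert (z (S m) <> z jm) by (apply Hinj; lia). lra.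
        -- pose proof (Hjm2 j ltac:(lia)). assert (z j <> z jm) by (apply Hinj; lia). lra.
      * apply Hw1; lia.
    + intros i Hi. destruct (Nat.eq_dec i (S m)).
      * exists jm. auto.
      * destruct (Hw2 i ltac:(lia)) as [j [Hj Hwj]]. rewrite Hwj. unfold z'.
        destruct (Nat.eq_dec j jm). exists (S m). split; auto.
        exists j. split; auto.
Qed.

Lemma hermite_err (s : nat) (phi Q : R -> R) b (y : nat -> R) D lo hi t :
  (1 <= s)%nat -> openD D -> (forall x, lo <= x <= hi -> D x) -> Cn s phi D -> PolyD (pred s) b Q ->
  (forall k, (k < s)%nat -> lo <= y k <= hi) ->
  (forall i j, (i < s)%nat -> (j < s)%nat -> i <> j -> y i <> y j) ->
  (forall k, (k < s)%nat -> Q (y k) = phi (y k)) -> lo <= t <= hi ->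
  exists xi, lo <= xi <= hi /\
    phi t - Q t = Derive_n phi s xi / INR (Factorial.fact s) * prodf s (fun k => t - y k).
Proof.
  intros Hs HD Hsub Hphi HQ Hy Hinj Hint Ht.
  destruct (classic (exists j, (j < s)%nat /\ t = y j)) as [[j [Hj Htj]]|Hnot].
  - exists lo. split. lra.
    rewrite (prodf_zero s _ j Hj). subst t. rewrite Hint; auto. ring. subst t. ring.
  - set (om := fun x => prodf s (fun k => x - y k)).
    assert (Hom : om t <> 0).
    { apply prodf_neq0. intros k Hk Hc. apply Hnot. exists k. split; auto. lra. }
    set (K := (phi t - Q t) / om t).
    set (F := fun x => phi x - Q x - K * om x).
    set (z := fun i => if Nat.eq_dec i s then t else y i).
    destruct (sort_ex s z) as [w [Hw1 Hw2]].
    { intros i j Hi Hj Hij. unfold z.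
      destruct (Nat.eq_dec i s), (Nat.eq_dec j s); try lia.
      - intro Hc. apply Hnot. exists j. split. lia. auto.
      - intro Hc. apply Hnot. exists i. split. lia. auto.
      - apply Hinj; lia. }
    assert (HQs : PolyD s 0 Q).
    { destruct s. lia. apply PolyD_lift with b. exact HQ. }
    assert (HCF : Cn s F D).
    { unfold F. apply Cn_minus; auto. apply Cn_minus; auto. apply PolyD_Cn with s 0; auto.
      apply Cn_scal; auto. apply PolyD_Cn with s 1; auto. apply PolyD_omega. }
    destruct (gen_rolle D lo hi s F w HD Hsub HCF) as [xi [Hxi1 Hxi2]].
    + intros i Hi. destruct (Hw2 i Hi) as [j [Hj Hwj]]. rewrite Hwj. unfold z.
      destruct (Nat.eq_dec j s); auto. apply Hy; lia.
    + exact Hw1.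
    + intros i Hi. destruct (Hw2 i Hi) as [j [Hj Hwj]]. rewrite Hwj. unfold z, F.
      destruct (Nat.eq_dec j s).
      * unfold K. field. auto.
      * rewrite Hint by lia. unfold om. rewrite (prodf_zero s _ j). ring. lia. ring.
    + exists xi. split; auto.
      assert (HDx : D xi) by (apply Hsub; auto).
      unfold F in Hxi2.
      rewrite (Derive_n_minus_D s (fun x => phi x - Q x) (fun x => K * om x) D) in Hxi2; auto.
      rewrite (Derive_n_minus_D s phi Q D) in Hxi2; auto.
      rewrite Derive_n_scal_l in Hxi2.
      rewrite (Derive_n_PolyD s 0 Q xi HQs) in Hxi2.
      rewrite (Derive_n_PolyD s 1 om xi (PolyD_omega s y)) in Hxi2.
      assert (Hf : INR (Factorial.fact s) <> 0) by (apply INR_fact_neq_0).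
      assert (HK : K = Derive_n phi s xi / INR (Factorial.fact s)).
      { apply (Rmult_eq_reg_r (INR (Factorial.fact s))); auto. field_simplify; auto. lra. }
      fold (om t). rewrite <- HK. unfold K. field. auto.
      * apply PolyD_Cn with s 0; auto.
      * apply Cn_minus; auto. apply PolyD_Cn with s 0; auto.
      * apply Cn_scal; auto. apply PolyD_Cn with s 1; auto. apply PolyD_omega.
Qed.

Definition inr (a b t : R) := Rmin a b <= t <= Rmax a b.

Lemma exRI (f : R -> R) a b : (forall t, inr a b t -> continuous f t) -> ex_RInt f a b.
Proof. intros H. apply (ex_RInt_continuous (V := R_CompleteNormedModule)). exact H. Qed.

Lemma RInt_lin k a : RInt (fun t => k * (t - a)) a 0 = k * (a * a) / 2.
Proof.
  apply is_RInt_unique.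
  set (F := fun t => k * ((t - a) * (t - a)) / 2).
  assert (H : is_RInt (fun t => k * (t - a)) a 0 (minus (F 0) (F a))).
  { apply (is_RInt_derive (V := R_CompleteNormedModule)).
  - intros x _. unfold F. auto_derive; auto. field.
  - intros x _. apply (continuous_mult (fun _ => k) (fun t => t - a)). apply continuous_const.
    apply (continuous_plus (fun t => t) (fun _ => - a)). apply continuous_id. apply continuous_const. }
  replace (k * (a * a) / 2) with (minus (F 0) (F a)). exact H.
  unfold minus, plus, opp, F; simpl. field.
Qed.

Lemma RInt_abs_bound (f g : R -> R) a b :
  (forall t, inr a b t -> continuous f t) -> (forall t, inr a b t -> continuous g t) ->
  (forall t, inr a b t -> Rabs (f t) <= g t) -> Rabs (RInt f a b) <= Rabs (RInt g a b).
Proof.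
  intros Hf Hg Hfg.
  assert (key : forall a b, a <= b -> (forall t, inr a b t -> continuous f t) -> (forall t, inr a b t -> continuous g t) ->
     (forall t, inr a b t -> Rabs (f t) <= g t) -> Rabs (RInt f a b) <= Rabs (RInt g a b)).
  { clear. intros a b Hab Hf Hg Hfg.
    eapply Rle_trans. apply abs_RInt_le; auto. apply exRI; auto.
    eapply Rle_trans; [|apply Rle_abs]. apply RInt_le; auto.
    apply exRI. intros t Ht. apply (continuous_comp f Rabs). auto. apply continuous_Rabs.
    apply exRI; auto.
    intros x Hx. apply Hfg. unfold inr. rewrite Rmin_left, Rmax_right; lra. }
  destruct (Rle_dec a b) as [Hab|Hab]. apply key; auto.
  assert (Hs : forall t, inr b a t -> inr a b t).
  { intros t. unfold inr. rewrite Rmin_comm, Rmax_comm. auto. }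
  rewrite <- (opp_RInt_swap (V := R_CompleteNormedModule) f b a), <- (opp_RInt_swap (V := R_CompleteNormedModule) g b a).
  unfold opp; simpl. rewrite !Rabs_Ropp. apply key. lra.
  intros; apply Hf; auto. intros; apply Hg; auto. intros; apply Hfg; auto.
  apply exRI; auto. apply exRI; auto.
Qed.

Lemma int_est (h : R -> R) a A P eta : 0 <= eta ->
  (forall t, inr a 0 t -> continuous h t) ->
  (forall t, inr a 0 t -> Rabs (h t - A * P * (t - a)) <= eta * Rabs P * Rabs (t - a)) ->
  Rabs (RInt h a 0 - A * P * (a * a) / 2) <= eta * Rabs P * (a * a) / 2.
Proof.
  intros Heta Hc Hb.
  set (sg := if Rle_dec a 0 then 1 else -1).
  assert (Hsg : forall t, inr a 0 t -> Rabs (t - a) = sg * (t - a)).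
  { intros t Ht. unfold inr, sg in *. destruct (Rle_dec a 0).
    rewrite Rmin_left, Rmax_right in Ht by lra. rewrite Rabs_right; lra.
    rewrite Rmin_right, Rmax_left in Ht by lra. rewrite Rabs_left1; lra. }
  assert (Hcl : forall k t, continuous (fun t => k * (t - a)) t).
  { intros k t. apply (continuous_mult (fun _ => k) (fun t => t - a)). apply continuous_const.
    apply (continuous_plus (fun t => t) (fun _ => - a)). apply continuous_id. apply continuous_const. }
  rewrite <- RInt_lin.
  replace (RInt h a 0 - RInt (fun t : R => A * P * (t - a)) a 0)
    with (RInt (fun t => h t - A * P * (t - a)) a 0).
  2: { rewrite (RInt_minus (V := R_CompleteNormedModule)). reflexivity. apply exRI; auto. apply exRI; auto. }
  eapply Rle_trans. apply (RInt_abs_bound _ (fun t => (eta * Rabs P * sg) * (t - a))).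
  - intros t Ht. apply (continuous_minus h). auto. auto.
  - auto.
  - intros t Ht. replace (eta * Rabs P * sg * (t - a)) with (eta * Rabs P * (sg * (t - a))) by ring. rewrite <- Hsg; auto.
  - rewrite RInt_lin. unfold sg. destruct (Rle_dec a 0).
    + rewrite Rabs_right. lra. assert (0 <= eta * Rabs P * 1 * (a*a)) by (apply Rmult_le_pos; [apply Rmult_le_pos; [apply Rmult_le_pos; auto; apply Rabs_pos|lra]|nra]). lra.
    + rewrite Rabs_left1. lra. assert (0 <= eta * Rabs P * (a*a)) by (apply Rmult_le_pos; [apply Rmult_le_pos; auto; apply Rabs_pos|nra]). lra.
Qed.

Lemma prodf_pert m (u v : nat -> R) tau : 0 <= tau ->
  (forall k, (k < m)%nat -> Rabs (u k - v k) <= tau * Rabs (v k)) ->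
  Rabs (prodf m u - prodf m v) <= ((1 + tau) ^ m - 1) * Rabs (prodf m v).
Proof.
  intros Ht. induction m as [|m IH]; intros H; simpl.
  - rewrite Rminus_diag, Rabs_R0. lra.
  - assert (IH' := IH (fun k Hk => H k ltac:(lia))).
    assert (Hm := H m ltac:(lia)).
    replace (prodf m u * u m - prodf m v * v m) with ((prodf m u - prodf m v) * u m + prodf m v * (u m - v m)) by ring.
    eapply Rle_trans. apply Rabs_triang. rewrite !Rabs_mult.
    assert (Hum : Rabs (u m) <= (1 + tau) * Rabs (v m)).
    { replace (u m) with ((u m - v m) + v m) by ring. eapply Rle_trans. apply Rabs_triang. lra. }
    assert (0 <= Rabs (u m)) by apply Rabs_pos. assert (0 <= Rabs (v m)) by apply Rabs_pos.
    assert (0 <= Rabs (prodf m v)) by apply Rabs_pos.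
    assert (0 <= Rabs (prodf m u - prodf m v)) by apply Rabs_pos.
    assert (1 <= (1 + tau) ^ m) by (apply pow_R1_Rle; lra).
    apply Rle_trans with (((1 + tau) ^ m - 1) * Rabs (prodf m v) * ((1 + tau) * Rabs (v m)) + Rabs (prodf m v) * (tau * Rabs (v m))).
    apply Rplus_le_compat. apply Rmult_le_compat; auto. apply Rmult_le_compat_l; auto.
    right. ring.
Qed.

Lemma ball_R (x y : R) e : ball x e y <-> Rabs (y - x) < e.
Proof. cbn. unfold AbsRing_ball, abs, minus, plus, opp. simpl. tauto. Qed.

Lemma loc_eps x (P : R -> Prop) : locally x P -> exists d, 0 < d /\ forall y, Rabs (y - x) < d -> P y.
Proof.
  intros [e He]. exists e. split. apply cond_pos. intros y Hy. apply He. apply ball_R. auto.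
Qed.

Lemma eps_loc x (P : R -> Prop) d : 0 < d -> (forall y, Rabs (y - x) < d -> P y) -> locally x P.
Proof.
  intros Hd H. exists (mkposreal d Hd). intros y Hy. apply H. apply ball_R in Hy. auto.
Qed.

Lemma cont_eps (g : R -> R) x : continuous g x -> forall e, 0 < e -> exists d, 0 < d /\
  forall y, Rabs (y - x) < d -> Rabs (g y - g x) < e.
Proof.
  intros Hc e He. unfold continuous in Hc.
  apply (proj1 (filterlim_locally g (g x))) with (eps := mkposreal e He) in Hc.
  destruct (loc_eps _ _ Hc) as [d [Hd H]]. exists d. split; auto.
Qed.

Lemma openD_ball c r : openD (fun x => Rabs (x - c) < r).
Proof.
  intros x Hx. apply eps_loc with (r - Rabs (x - c)). lra.
  intros y Hy. replace (y - c) with ((y - x) + (x - c)) by ring.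
  eapply Rle_lt_trans. apply Rabs_triang. lra.
Qed.

Lemma inv_deriv (f g : R -> R) y0 dd :
  continuous g y0 -> locally y0 (fun y => f (g y) = y) -> is_derive f (g y0) dd -> dd <> 0 ->
  is_derive g y0 (/ dd).
Proof.
  intros Hc Hloc Hd Hdd. apply is_derive_Reals. apply is_derive_Reals in Hd.
  destruct (loc_eps _ _ Hloc) as [d3 [Hd3 H3]].
  assert (Hf0 : f (g y0) = y0) by (apply H3; rewrite Rminus_diag, Rabs_R0; auto).
  intros e He.
  assert (Hadd : 0 < Rabs dd) by (apply Rabs_pos_lt; auto).
  set (e1 := Rmin (Rabs dd / 2) (e * (Rabs dd * Rabs dd) / 2)).
  assert (He1 : 0 < e1) by (unfold e1; apply Rmin_pos; [lra| apply Rmult_lt_0_compat; [apply Rmult_lt_0_compat; [auto| nra]|lra]]).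
  destruct (Hd e1 He1) as [d1 Hd1].
  destruct (cont_eps g y0 Hc d1 (cond_pos d1)) as [d2 [Hd2 H2]].
  assert (Hd23 : 0 < Rmin d2 d3) by (apply Rmin_pos; auto).
  exists (mkposreal _ Hd23). intros h Hh0 Hh. simpl in Hh.
  assert (Hh2 : Rabs (y0 + h - y0) < d2) by (replace (y0 + h - y0) with h by ring; apply Rlt_le_trans with (1 := Hh); apply Rmin_l).
  assert (Hh3 : Rabs (y0 + h - y0) < d3) by (replace (y0 + h - y0) with h by ring; apply Rlt_le_trans with (1 := Hh); apply Rmin_r).
  set (u := g (y0 + h) - g y0).
  assert (Hu : u <> 0).
  { intro Hu0. assert (g (y0 + h) = g y0) by (unfold u in Hu0; lra).
    pose proof (H3 _ Hh3). rewrite H in H0. rewrite Hf0 in H0. lra. }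
  assert (Hu1 : Rabs u < d1) by (apply H2; auto).
  specialize (Hd1 u Hu Hu1).
  replace (g y0 + u) with (g (y0 + h)) in Hd1 by (unfold u; ring).
  rewrite (H3 _ Hh3), Hf0 in Hd1. replace (y0 + h - y0) with h in Hd1 by ring.
  set (q := h / u) in *.
  assert (Hq : Rabs (q - dd) < Rabs dd / 2) by (apply Rlt_le_trans with (1 := Hd1); apply Rmin_l).
  assert (Hq2 : Rabs (q - dd) < e * (Rabs dd * Rabs dd) / 2) by (apply Rlt_le_trans with (1 := Hd1); apply Rmin_r).
  assert (Hqa : Rabs dd / 2 <= Rabs q).
  { pose proof (Rabs_triang_inv dd q). rewrite <- Rabs_Ropp in Hq. replace (- (q - dd)) with (dd - q) in Hq by ring. lra. }
  assert (Hq0 : q <> 0) by (intro; rewrite H in Hqa; rewrite Rabs_R0 in Hqa; lra).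
  replace (u / h - / dd) with ((dd - q) / (q * dd)).
  2: { unfold q. field. repeat split; auto. }
  unfold Rdiv. rewrite Rabs_mult, Rabs_inv, Rabs_mult.
  rewrite <- Rabs_Ropp. replace (- (dd - q)) with (q - dd) by ring.
  apply Rmult_lt_reg_r with (Rabs q * Rabs dd). apply Rmult_lt_0_compat; auto. lra.
  rewrite Rmult_assoc, Rinv_l. 2: apply Rgt_not_eq, Rmult_lt_0_compat; auto; lra.
  rewrite Rmult_1_r. apply Rlt_le_trans with (1 := Hq2).
  apply Rle_trans with (e * (Rabs dd / 2 * Rabs dd)). right; field.
  apply Rmult_le_compat_l. lra. apply Rmult_le_compat_r. lra. auto.
Qed.

Lemma mvt_C (F : R -> R) a b : a < b -> (forall x, a <= x <= b -> ex_derive F x) ->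
  exists c, a < c < b /\ F b - F a = Derive F c * (b - a).
Proof.
  intros Hab HF.
  assert (pr1 : forall c, a < c < b -> derivable_pt F c).
  { intros c Hc. apply ex_derive_Reals_0, HF. lra. }
  assert (pr2 : forall c, a < c < b -> derivable_pt id c).
  { intros c Hc. apply derivable_pt_id. }
  destruct (MVT F id a b pr1 pr2 Hab) as [c [P HP]].
  - intros c Hc. apply derivable_continuous_pt, ex_derive_Reals_0, HF; lra.
  - intros c Hc. apply derivable_continuous_pt, derivable_pt_id.
  - exists c. split; auto. rewrite Derive_Reals with (pr := pr1 c P) in HP.
    rewrite Derive_Reals in HP. unfold id in HP.
    replace (Derive (fun x => x) c) with 1 in HP by (symmetry; apply Derive_id).
    lra.
Qed.

Lemma g_setup (f : R -> R) alpha (g : R -> R) r :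
  smooth f -> f alpha = 0 -> Derive f alpha <> 0 -> 0 < r -> g 0 = alpha ->
  (forall y, Rabs y < r -> f (g y) = y /\ continuous g y) ->
  exists rI r0, 0 < rI /\ 0 < r0 /\ r0 <= r /\
   (forall x, Rabs (x - alpha) < rI -> Rabs (Derive f x - Derive f alpha) < Rabs (Derive f alpha) / 2) /\
   (forall x, Rabs (x - alpha) < rI -> Derive f x <> 0) /\
   (forall x1 x2, Rabs (x1 - alpha) < rI -> Rabs (x2 - alpha) < rI -> f x1 = f x2 -> x1 = x2) /\
   (forall y, Rabs y < r0 -> Rabs (g y - alpha) < rI) /\
   (forall n, Cn n g (fun y => Rabs y < r0)) /\
   (forall y, Rabs y < r0 -> Derive g y = / Derive f (g y)) /\
   (forall x, Rabs (x - alpha) < rI -> Rabs (f x) < r0 -> g (f x) = x).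
Proof.
  intros Hf Hfa Hd Hr Hg0 Hg.
  set (d := Derive f alpha).
  assert (Had : 0 < Rabs d) by (apply Rabs_pos_lt; auto).
  assert (Hcd : continuous (Derive f) alpha) by (apply exd_cont; apply (Hf 2%nat alpha)).
  destruct (cont_eps _ _ Hcd (Rabs d / 2)) as [rI [HrI HrI2]]. lra.
  assert (Hnz : forall x, Rabs (x - alpha) < rI -> Derive f x <> 0).
  { intros x Hx Hc. specialize (HrI2 x Hx). rewrite Hc in HrI2. unfold d in *.
    rewrite Rminus_0_l, Rabs_Ropp in HrI2. lra. }
  assert (Hinj : forall x1 x2, Rabs (x1 - alpha) < rI -> Rabs (x2 - alpha) < rI -> f x1 = f x2 -> x1 = x2).
  { assert (key : forall x1 x2, x1 < x2 -> Rabs (x1 - alpha) < rI -> Rabs (x2 - alpha) < rI -> f x1 <> f x2).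
    { intros x1 x2 H12 H1 H2 Heq. destruct (mvt_C f x1 x2 H12) as [c [Hc Hc2]].
      intros x _. apply (Hf 1%nat x).
      assert (Rabs (c - alpha) < rI).
      { apply Rabs_def1; apply Rabs_def2 in H1; apply Rabs_def2 in H2; lra. }
      rewrite Heq, Rminus_diag in Hc2. symmetry in Hc2. apply Rmult_integral in Hc2.
      destruct Hc2. apply (Hnz c); auto. lra. }
    intros x1 x2 H1 H2 Heq. destruct (Rtotal_order x1 x2) as [Hlt|[Heq'|Hgt]]; auto.
    exfalso; apply (key x1 x2); auto. exfalso; apply (key x2 x1); auto. }
  assert (Hcg : continuous g 0) by (apply Hg; rewrite Rabs_R0; auto).
  destruct (cont_eps g 0 Hcg rI HrI) as [r1 [Hr1 Hr1b]].
  set (r0 := Rmin r1 r).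
  assert (Hr0 : 0 < r0) by (apply Rmin_pos; auto).
  set (D := fun y => Rabs y < r0).
  assert (HD : openD D).
  { intros y Hy. unfold D in *. apply eps_loc with (r0 - Rabs y). lra.
    intros z Hz. replace z with ((z - y) + y) by ring. eapply Rle_lt_trans. apply Rabs_triang. lra. }
  assert (HgI : forall y, Rabs y < r0 -> Rabs (g y - alpha) < rI).
  { intros y Hy. rewrite <- Hg0. apply Hr1b. rewrite Rminus_0_r. apply Rlt_le_trans with r0; auto. apply Rmin_l. }
  assert (Hyr : forall y, Rabs y < r0 -> Rabs y < r) by (intros y Hy; apply Rlt_le_trans with r0; auto; apply Rmin_r).
  assert (Hder : forall y, Rabs y < r0 -> is_derive g y (/ Derive f (g y))).
  { intros y Hy. apply (inv_deriv f g).
    - apply Hg; auto.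
    - apply eps_loc with (r - Rabs y). pose proof (Hyr y Hy); lra.
      intros z Hz. apply Hg. replace z with ((z - y) + y) by ring.
      eapply Rle_lt_trans. apply Rabs_triang. lra.
    - apply Derive_correct. apply (Hf 1%nat).
    - apply Hnz; auto. }
  exists rI, r0.
  split; [auto|]. split; [auto|]. split; [apply Rmin_r|].
  split; [intros x Hx; apply HrI2 in Hx; auto|].
  split; [auto|]. split; [auto|]. split; [auto|].
  split.
  { intros n. induction n as [|n IH].
    + intros y Hy. apply Hg; auto.
    + split.
      * intros y Hy. eexists. apply Hder; auto.
      * apply Cn_ext with (fun y => / Derive f (g y)); auto.
        intros y Hy. symmetry. apply is_derive_unique. apply Hder; auto.
        set (I := fun x => Rabs (x - alpha) < rI).
        apply (Cn_comp n (fun x => / Derive f x) g D I); auto. apply openD_ball.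
        apply (Cn_comp n Rinv (Derive f) I (fun x => x <> 0)); auto. apply openD_ball. apply openD_neq0.
        apply Cn_inv. apply (smooth_Cn f Hf n 1 I). }
  split.
  - intros y Hy. apply is_derive_unique. apply Hder; auto.
  - intros x Hx Hfx. apply Hinj; [apply HgI; auto | auto | apply Hg; apply Hyr; auto].
Qed.

Lemma prodf_bound m (u : nat -> R) B : 0 <= B -> (forall k, (k < m)%nat -> Rabs (u k) <= B) -> Rabs (prodf m u) <= B ^ m.
Proof.
  intros HB. induction m as [|m IH]; intros H; simpl.
  - rewrite Rabs_R1. lra.
  - rewrite Rabs_mult. rewrite Rmult_comm. apply Rmult_le_compat; try apply Rabs_pos.
    apply H; lia. apply IH. intros; apply H; lia.
Qed.

Lemma pointwise (s' : nat) (g : R -> R) r0 : 0 < r0 -> Cn (S (S s')) g (fun y => Rabs y < r0) ->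
  let s := S s' in
  let A := Derive_n (Derive g) s 0 / INR (Factorial.fact s) in
  forall eps, 0 < eps -> exists rho, 0 < rho /\ rho < r0 /\
  forall (y : nat -> R) c, (forall k, (k < s)%nat -> Rabs (y k) < rho) ->
   (forall i j, (i < s)%nat -> (j < s)%nat -> i <> j -> y i <> y j) ->
   (forall k, (k < s)%nat -> Derive (poly_eval c s) (y k) = Derive g (y k)) ->
   forall t, Rabs t < rho ->
   Rabs (Derive g t - Derive (poly_eval c s) t - A * prodf s (fun k => t - y k)) <= eps * Rabs (prodf s (fun k => t - y k)).
Proof.
  intros Hr0 HC s A eps Heps.
  set (D := fun y => Rabs y < r0).
  assert (HD : openD D).
  { intros y Hy. unfold D in *. apply eps_loc with (r0 - Rabs y). lra.
    intros z Hz. replace z with ((z - y) + y) by ring. eapply Rle_lt_trans. apply Rabs_triang. lra. }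
  destruct HC as [_ HC].
  assert (Hcont : continuous (Derive_n (Derive g) s) 0).
  { apply (Cn_Derive_n s 0 (Derive g) D HD). rewrite Nat.add_0_r. exact HC. unfold D. rewrite Rabs_R0. auto. }
  assert (Hf : 0 < INR (Factorial.fact s)) by (apply lt_0_INR, Factorial.lt_O_fact).
  destruct (cont_eps _ _ Hcont (eps * INR (Factorial.fact s))) as [de [Hde Hde2]]. apply Rmult_lt_0_compat; auto.
  set (rho := Rmin de r0 / 2).
  assert (Hrho : 0 < rho) by (unfold rho; apply Rmult_lt_0_compat; [apply Rmin_pos; auto|lra]).
  assert (Hrho1 : rho < de) by (unfold rho; pose proof (Rmin_l de r0); lra).
  assert (Hrho2 : rho < r0) by (unfold rho; pose proof (Rmin_r de r0); lra).
  exists rho. split; auto. split; auto.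
  intros y c Hy Hinj Hint t Ht.
  assert (HQ : PolyD s' (INR (S s') * c s) (Derive (poly_eval c s))).
  { destruct (PolyD_poly_eval s c) as [_ H]. exact H. }
  destruct (hermite_err s (Derive g) (Derive (poly_eval c s)) (INR (S s') * c s) y D (- rho) rho t)
    as [xi [Hxi1 Hxi2]]; auto.
  - unfold s; lia.
  - intros x Hx. unfold D. apply Rabs_def1; lra.
  - intros k Hk. specialize (Hy k Hk). apply Rabs_def2 in Hy. lra.
  - apply Rabs_def2 in Ht. lra.
  - rewrite Hxi2. unfold A.
    replace (Derive_n (Derive g) s xi / INR (Factorial.fact s) * prodf s (fun k => t - y k) -
      Derive_n (Derive g) s 0 / INR (Factorial.fact s) * prodf s (fun k => t - y k))
      with ((Derive_n (Derive g) s xi - Derive_n (Derive g) s 0) / INR (Factorial.fact s) * prodf s (fun k => t - y k)) by (field; lra).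
    rewrite Rabs_mult. apply Rmult_le_compat_r. apply Rabs_pos.
    unfold Rdiv. rewrite Rabs_mult, Rabs_inv, (Rabs_right (INR _)) by lra.
    apply Rmult_le_reg_r with (INR (Factorial.fact s)); auto.
    rewrite Rmult_assoc, Rinv_l by lra. rewrite Rmult_1_r. left. apply Hde2.
    rewrite Rminus_0_r. apply Rle_lt_trans with rho; auto. apply Rabs_le; lra.
Qed.

Lemma inr_abs a t : inr a 0 t -> Rabs t <= Rabs a.
Proof.
  unfold inr. intros H. destruct (Rle_dec a 0).
  rewrite Rmin_left, Rmax_right in H by lra. rewrite !Rabs_left1; lra.
  rewrite Rmin_right, Rmax_left in H by lra. rewrite !Rabs_right; lra.
Qed.

Lemma step_est (s' : nat) (g : R -> R) r0 : 0 < r0 -> Cn (S (S s')) g (fun y => Rabs y < r0) ->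
  let s := S s' in
  let A := Derive_n (Derive g) s 0 / INR (Factorial.fact s) in
  forall eps, 0 < eps -> exists rho, 0 < rho /\ rho < r0 /\
  forall (y : nat -> R) c tau, 0 <= tau -> (forall k, (k < s)%nat -> Rabs (y k) < rho) ->
   (forall i j, (i < s)%nat -> (j < s)%nat -> i <> j -> y i <> y j) ->
   (forall k, (k < s)%nat -> Derive (poly_eval c s) (y k) = Derive g (y k)) ->
   let a := y s' in let P := prodf s' (fun k => - y k) in
   let E := (g 0 - poly_eval c s 0) - (g a - poly_eval c s a) in
   Rabs E <= (Rabs A + eps) * (2 * rho) ^ s' * (a * a) / 2 /\
   ((forall k, (k < s')%nat -> Rabs a <= tau * Rabs (y k)) ->
    Rabs (E - A * P * (a * a) / 2) <= (eps * (1 + tau) ^ s' + Rabs A * ((1 + tau) ^ s' - 1)) * Rabs P * (a * a) / 2).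
Proof.
  intros Hr0 HC s A eps Heps.
  destruct (pointwise s' g r0 Hr0 HC eps Heps) as [rho [Hrho1 [Hrho2 Hpw]]].
  exists rho. split; auto. split; auto.
  intros y c tau Htau Hy Hinj Hint a P E.
  set (D := fun y => Rabs y < r0).
  assert (HD : openD D).
  { intros z Hz. unfold D in *. apply eps_loc with (r0 - Rabs z). lra.
    intros w Hw. replace w with ((w - z) + z) by ring. eapply Rle_lt_trans. apply Rabs_triang. lra. }
  assert (Ha : Rabs a < rho) by (apply Hy; unfold s; lia).
  set (h := fun t => Derive g t - Derive (poly_eval c s) t).
  assert (HCg := HC). destruct HCg as [Hgd HCg'].
  assert (Hpd : forall t, ex_derive (poly_eval c s) t) by (apply (PolyD_ex_derive s (c s)); apply PolyD_poly_eval).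
  assert (Hdpc : forall t, continuous (Derive (poly_eval c s)) t).
  { intros t. destruct (PolyD_poly_eval s c) as [_ H]. apply exd_cont. apply (PolyD_ex_derive s' _ _ H). }
  assert (Hrange : forall t, inr a 0 t -> D t).
  { intros t Ht. apply inr_abs in Ht. unfold D. lra. }
  assert (Hhc : forall t, inr a 0 t -> continuous h t).
  { intros t Ht. unfold h. apply (continuous_minus (Derive g)); [apply (Cn_cont _ _ _ HCg'), Hrange, Ht | apply Hdpc]. }
  assert (HE : E = RInt h a 0).
  { set (G := fun t => g t - poly_eval c s t).
    assert (HG : RInt (Derive G) a 0 = G 0 - G a).
    { apply RInt_Derive.
      - intros x Hx. apply (ex_derive_minus g). apply Hgd, Hrange, Hx. auto.
      - intros x Hx. apply continuous_ext_loc with h. apply (loc_eq D); auto.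
        intros z Hz. unfold h, G. rewrite Derive_minus; auto.
        apply Hhc; auto. }
    unfold E. replace (g 0 - poly_eval c s 0 - (g a - poly_eval c s a)) with (G 0 - G a) by reflexivity.
    rewrite <- HG. apply RInt_ext. intros x Hx. unfold G, h. apply Derive_minus.
    apply Hgd. apply Hrange. unfold inr. lra. auto. }
  assert (Hom : forall t, Rabs t < rho -> prodf s (fun k => t - y k) = prodf s' (fun k => t - y k) * (t - a)).
  { intros t _. reflexivity. }
  assert (Hpt : forall t, inr a 0 t -> Rabs (h t - A * prodf s (fun k => t - y k)) <= eps * Rabs (prodf s (fun k => t - y k))).
  { intros t Ht. apply Hpw; auto. apply inr_abs in Ht. lra. }
  split.
  - rewrite HE. assert (Hz : 0 * 1 * (a * a) / 2 = 0) by field. replace (RInt h a 0) with (RInt h a 0 - 0 * 1 * (a * a) / 2) by (rewrite Hz; apply Rminus_0_r).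
    replace ((Rabs A + eps) * (2 * rho) ^ s' * (a * a) / 2) with (((Rabs A + eps) * (2 * rho) ^ s') * Rabs 1 * (a * a) / 2)
      by (rewrite Rabs_R1; field).
    apply int_est; auto.
    + apply Rmult_le_pos. pose proof (Rabs_pos A); lra. apply pow_le; lra.
    + intros t Ht. specialize (Hpt t Ht). rewrite Hom in Hpt by (apply inr_abs in Ht; lra).
      rewrite Rabs_R1. replace (h t - 0 * 1 * (t - a)) with (h t) by ring.
      assert (Hb : Rabs (prodf s' (fun k => t - y k)) <= (2 * rho) ^ s').
      { apply prodf_bound. lra. intros k Hk. apply inr_abs in Ht.
        assert (Rabs (y k) < rho) by (apply Hy; unfold s; lia).
        unfold Rminus. eapply Rle_trans. apply Rabs_triang. rewrite Rabs_Ropp. lra. }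
      rewrite Rabs_mult in Hpt.
      replace (h t) with ((h t - A * (prodf s' (fun k => t - y k) * (t - a))) + A * (prodf s' (fun k => t - y k) * (t - a))) by ring.
      eapply Rle_trans. apply Rabs_triang. rewrite (Rabs_mult A), Rabs_mult.
      assert (0 <= Rabs (t - a)) by apply Rabs_pos. assert (0 <= Rabs A) by apply Rabs_pos.
      assert (0 <= Rabs (prodf s' (fun k => t - y k))) by apply Rabs_pos.
      apply Rle_trans with (eps * (Rabs (prodf s' (fun k => t - y k)) * Rabs (t - a)) + Rabs A * (Rabs (prodf s' (fun k => t - y k)) * Rabs (t - a))).
      lra.
      replace ((Rabs A + eps) * (2 * rho) ^ s' * 1 * Rabs (t - a)) with (eps * ((2 * rho) ^ s' * Rabs (t - a)) + Rabs A * ((2 * rho) ^ s' * Rabs (t - a))) by ring.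
      apply Rplus_le_compat; apply Rmult_le_compat_l; try lra; apply Rmult_le_compat_r; auto.
  - intros Htau2. rewrite HE. apply int_est; auto.
    + apply Rplus_le_le_0_compat. apply Rmult_le_pos. lra. apply pow_le; lra.
      apply Rmult_le_pos. apply Rabs_pos. assert (1 <= (1 + tau) ^ s') by (apply pow_R1_Rle; lra). lra.
    + intros t Ht. specialize (Hpt t Ht). rewrite Hom in Hpt by (apply inr_abs in Ht; lra).
      assert (Hpp : Rabs (prodf s' (fun k => t - y k) - P) <= ((1 + tau) ^ s' - 1) * Rabs P).
      { apply prodf_pert; auto. intros k Hk. apply inr_abs in Ht.
        replace (t - y k - - y k) with t by ring. rewrite Rabs_Ropp.
        specialize (Htau2 k Hk). fold a. lra. }
      assert (Hpa : Rabs (prodf s' (fun k => t - y k)) <= (1 + tau) ^ s' * Rabs P).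
      { replace (prodf s' (fun k => t - y k)) with ((prodf s' (fun k => t - y k) - P) + P) by ring.
        eapply Rle_trans. apply Rabs_triang. lra. }
      replace (h t - A * P * (t - a)) with ((h t - A * (prodf s' (fun k => t - y k) * (t - a))) + A * (prodf s' (fun k => t - y k) - P) * (t - a)) by ring.
      eapply Rle_trans. apply Rabs_triang. rewrite !Rabs_mult. rewrite Rabs_mult in Hpt.
      assert (0 <= Rabs (t - a)) by apply Rabs_pos. assert (0 <= Rabs A) by apply Rabs_pos.
      assert (0 <= Rabs (prodf s' (fun k => t - y k))) by apply Rabs_pos.
      apply Rle_trans with (eps * ((1 + tau) ^ s' * Rabs P * Rabs (t - a)) + Rabs A * (((1 + tau) ^ s' - 1) * Rabs P) * Rabs (t - a)).
      apply Rplus_le_compat. eapply Rle_trans. apply Hpt. apply Rmult_le_compat_l. lra. apply Rmult_le_compat_r; auto.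
      apply Rmult_le_compat_r; auto. apply Rmult_le_compat_l; auto.
      right. ring.
Qed.

Fixpoint Tg (k : nat) (q : R) : R := match k with O => 0 | S k' => Tg k' q + / q ^ (S k') end.
Definition Gf (s : nat) (q : R) := 1 - / q - Tg s q.

Lemma Tg_geom k q : 0 < q -> (q - 1) * Tg k q = 1 - / q ^ k.
Proof.
  intros Hq. induction k as [|k IH]; simpl. field. 
  rewrite Rmult_plus_distr_l, IH. field. split; [apply pow_nonzero; lra|lra].
Qed.

Lemma rate_poly_S s' q : rate_poly (S s') q = q ^ s' * (q * q - 3 * q + 1) + 1.
Proof. unfold rate_poly. replace (S s' - 1)%nat with s' by lia. simpl. ring. Qed.

Lemma rate_G s' q : 1 < q -> rate_poly (S s') q = (q - 1) * q ^ (S s') * Gf (S s') q.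
Proof.
  intros Hq. rewrite rate_poly_S. unfold Gf.
  replace ((q - 1) * q ^ S s' * (1 - / q - Tg (S s') q)) with ((q - 1) * q ^ S s' * (1 - / q) - q ^ S s' * ((q - 1) * Tg (S s') q)) by ring.
  rewrite Tg_geom by lra. simpl. field. split; [apply pow_nonzero; lra|lra].
Qed.

Lemma pow_lt_strict n q1 q2 : 0 < q1 -> q1 < q2 -> q1 ^ (S n) < q2 ^ (S n).
Proof.
  intros H1 H12. induction n as [|n IH]. simpl; lra.
  replace (q1 ^ S (S n)) with (q1 * q1 ^ S n) by reflexivity.
  replace (q2 ^ S (S n)) with (q2 * q2 ^ S n) by reflexivity.
  assert (0 < q1 ^ S n) by (apply pow_lt; lra). nra.
Qed.

Lemma Tg_decr k q1 q2 : 0 < q1 -> q1 < q2 -> Tg (S k) q2 < Tg (S k) q1.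
Proof.
  intros H1 H12. induction k as [|k IH].
  - simpl. rewrite !Rplus_0_l, !Rmult_1_r. apply Rinv_lt_contravar; nra.
  - change (Tg (S k) q2 + / q2 ^ (S (S k)) < Tg (S k) q1 + / q1 ^ (S (S k))).
    apply Rplus_lt_compat; [exact IH|]. apply Rinv_lt_contravar.
    apply Rmult_lt_0_compat; apply pow_lt; lra. apply pow_lt_strict; auto.
Qed.

Lemma Gf_incr s' q1 q2 : 0 < q1 -> q1 < q2 -> Gf (S s') q1 < Gf (S s') q2.
Proof.
  intros H1 H12. unfold Gf. pose proof (Tg_decr s' q1 q2 H1 H12).
  assert (/ q2 < / q1) by (apply Rinv_lt_contravar; nra). lra.
Qed.

Lemma rp_cont s : continuity (rate_poly s).
Proof. unfold rate_poly. reg. Qed.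

Lemma rp_neg s' : rate_poly (S s') (3/2) < 0.
Proof.
  rewrite rate_poly_S. assert (1 <= (3/2) ^ s') by (apply pow_R1_Rle; lra). nra.
Qed.

Lemma rp_pos s' : 0 < rate_poly (S s') 3.
Proof.
  rewrite rate_poly_S. assert (0 < 3 ^ s') by (apply pow_lt; lra). nra.
Qed.

Lemma lt32 : 3/2 < 3. Proof. lra. Qed.

Definition pseq (s : nat) : R :=
  match s with
  | O => 0
  | S s' => proj1_sig (IVT (rate_poly (S s')) (3/2) 3 (rp_cont (S s')) lt32 (rp_neg s') (rp_pos s'))
  end.

Lemma pseq_spec s' : 3/2 <= pseq (S s') <= 3 /\ rate_poly (S s') (pseq (S s')) = 0.
Proof. simpl. destruct (IVT _ _ _ _ _ _ _) as [z Hz]. simpl. exact Hz. Qed.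

Definition Phi := (3 + sqrt 5) / 2.

Lemma sqrt5_bounds : 2 < sqrt 5 < 3.
Proof.
  split.
  - replace 2 with (sqrt 4). apply sqrt_lt_1; lra. replace 4 with (2*2) by ring. rewrite sqrt_square; lra.
  - replace 3 with (sqrt 9). apply sqrt_lt_1; lra. replace 9 with (3*3) by ring. rewrite sqrt_square; lra.
Qed.

Lemma quad_factor q : q * q - 3 * q + 1 = (q - Phi) * (q - (3 - sqrt 5) / 2).
Proof.
  unfold Phi. pose proof (sqrt_sqrt 5 ltac:(lra)). nra.
Qed.

Lemma pseq_props s' : let p := pseq (S s') in
  2 <= p /\ p < Phi /\ rate_poly (S s') p = 0 /\ Gf (S s') p = 0 /\ (forall q, rate_poly (S s') q = 0 -> q <= p) /\ Tg s' p = p - 2 /\ p ^ s' * (p * p - 3 * p + 1) = -1.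
Proof.
  intros p. destruct (pseq_spec s') as [Hb Hr]. fold p in Hb, Hr.
  assert (HG : Gf (S s') p = 0).
  { rewrite rate_G in Hr by lra. apply Rmult_integral in Hr. destruct Hr as [Hr|Hr]; auto.
    exfalso. apply Rmult_integral in Hr. destruct Hr as [Hr|Hr]. lra. apply (pow_nonzero p (S s')); lra. }
  assert (H2 : 2 <= p).
  { destruct (Rle_dec 2 p) as [|Hn]; auto. exfalso.
    assert (Gf (S s') p < Gf (S s') 2) by (apply Gf_incr; lra).
    assert (HG2 : rate_poly (S s') 2 <= 0).
    { rewrite rate_poly_S. assert (1 <= 2 ^ s') by (apply pow_R1_Rle; lra). nra. }
    rewrite rate_G in HG2 by lra.
    assert (0 < (2 - 1) * 2 ^ S s') by (apply Rmult_lt_0_compat; [lra|apply pow_lt; lra]).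
    assert (Gf (S s') 2 <= 0).
    { destruct (Rle_dec (Gf (S s') 2) 0); auto. exfalso. assert (0 < (2 - 1) * 2 ^ S s' * Gf (S s') 2) by (apply Rmult_lt_0_compat; lra). lra. }
    lra. }
  assert (Hq : p ^ s' * (p * p - 3 * p + 1) = -1) by (rewrite rate_poly_S in Hr; lra).
  pose proof sqrt5_bounds.
  split; auto. split.
  { destruct (Rlt_dec p Phi) as [|Hn]; auto. exfalso.
    assert (0 <= p * p - 3 * p + 1) by (rewrite quad_factor; apply Rmult_le_pos; lra).
    assert (0 < p ^ s') by (apply pow_lt; lra). nra. }
  split; auto. split; auto. split.
  - intros q Hq0. destruct (Rle_dec q 1) as [|Hn]; [lra|].
    rewrite rate_G in Hq0 by lra. apply Rmult_integral in Hq0. destruct Hq0 as [Hq0|Hq0].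
    + apply Rmult_integral in Hq0. destruct Hq0 as [Hq0|Hq0]. lra. exfalso. apply (pow_nonzero q (S s')); lra.
    + destruct (Rle_dec q p) as [|Hn2]; auto. exfalso.
      assert (Gf (S s') p < Gf (S s') q) by (apply Gf_incr; lra). lra.
  - split; auto.
    assert (Hg := Tg_geom s' p ltac:(lra)).
    assert (0 < p ^ s') by (apply pow_lt; lra).
    apply (Rmult_eq_reg_l (p - 1)); [|lra]. rewrite Hg.
    apply (Rmult_eq_reg_l (p ^ s')); [|lra].
    field_simplify; [|lra]. nra.
Qed.

Lemma pseq_mono s' : pseq (S s') < pseq (S (S s')).
Proof.
  destruct (pseq_props s') as [H1 [H2 [H3 [H4 _]]]].
  destruct (pseq_props (S s')) as [K1 [K2 [K3 [K4 _]]]].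
  set (p1 := pseq (S s')) in *. set (p2 := pseq (S (S s'))) in *.
  assert (E : Gf (S (S s')) p2 = Gf (S s') p2 - / p2 ^ (S (S s'))) by (unfold Gf; change (Tg (S (S s')) p2) with (Tg (S s') p2 + / p2 ^ (S (S s'))); lra).
  assert (0 < / p2 ^ (S (S s'))) by (apply Rinv_0_lt_compat, pow_lt; lra).
  destruct (Rlt_dec p1 p2) as [|Hn]; auto. exfalso.
  destruct (Req_dec p1 p2) as [Heq|Hne]. rewrite <- Heq in E, K4, H. lra.
  assert (Gf (S s') p2 < Gf (S s') p1) by (apply Gf_incr; lra). lra.
Qed.

Lemma pseq_close s' : Phi - (/ 2) ^ s' <= pseq (S s') <= Phi.
Proof.
  destruct (pseq_props s') as [H1 [H2 [H3 [H4 [H5 [H6 H7]]]]]].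
  set (p := pseq (S s')) in *.
  pose proof sqrt5_bounds.
  rewrite quad_factor in H7.
  assert (Hp : 0 < p ^ s') by (apply pow_lt; lra).
  assert (Hps : 2 ^ s' <= p ^ s') by (apply pow_incr; lra).
  assert (Hh : (/ 2) ^ s' = / 2 ^ s') by (rewrite pow_inv; auto).
  assert (H2s : 0 < 2 ^ s') by (apply pow_lt; lra).
  split; [|lra].
  assert (Hd : (Phi - p) * ((p - (3 - sqrt 5) / 2) * p ^ s') = 1) by nra.
  assert (Hd1 : 1 <= p - (3 - sqrt 5) / 2) by lra.
  rewrite Hh.
  assert (Phi - p <= / p ^ s').
  { apply (Rmult_le_reg_r (p ^ s')); auto. rewrite Rinv_l by lra. nra. }
  assert (/ p ^ s' <= / 2 ^ s') by (apply Rinv_le_contravar; auto).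
  lra.
Qed.

Lemma pseq_lim : is_lim_seq pseq Phi.
Proof.
  apply is_lim_seq_incr_1.
  apply is_lim_seq_le_le with (u := fun n => Phi - (/ 2) ^ n) (w := fun _ => Phi).
  - intros n. apply pseq_close.
  - replace (Finite Phi) with (Rbar_minus Phi 0) by (simpl; f_equal; ring).
    apply is_lim_seq_minus'. apply is_lim_seq_const. apply is_lim_seq_geom. rewrite Rabs_right; lra.
  - apply is_lim_seq_const.
Qed.

Fixpoint ssum (m : nat) (f : nat -> R) : R := match m with O => 0 | S m' => ssum m' f + f m' end.

Lemma ssum_ext m f g : (forall i, (i < m)%nat -> f i = g i) -> ssum m f = ssum m g.
Proof. induction m; simpl; intros H; auto. rewrite IHm, H; auto. Qed.

Lemma ssum_plus m f g : ssum m (fun i => f i + g i) = ssum m f + ssum m g.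
Proof. induction m; simpl; [ring|rewrite IHm; ring]. Qed.

Lemma ssum_scal m c f : ssum m (fun i => c * f i) = c * ssum m f.
Proof. induction m; simpl; [ring|rewrite IHm; ring]. Qed.

Lemma ssum_minus m f g : ssum m (fun i => f i - g i) = ssum m f - ssum m g.
Proof. induction m; simpl; [ring|rewrite IHm; ring]. Qed.

Lemma ssum_le m f g : (forall i, (i < m)%nat -> f i <= g i) -> ssum m f <= ssum m g.
Proof. induction m; simpl; intros H. lra. apply Rplus_le_compat; auto. Qed.

Lemma ssum_nonneg m f : (forall i, (i < m)%nat -> 0 <= f i) -> 0 <= ssum m f.
Proof. intros H. replace 0 with (ssum m (fun _ => 0)). apply ssum_le; auto. induction m; simpl; auto. rewrite IHm; auto; ring. Qed.

Lemma ssum_ge_term m f j : (forall i, (i < m)%nat -> 0 <= f i) -> (j < m)%nat -> f j <= ssum m f.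
Proof.
  induction m; simpl; intros H Hj. lia.
  destruct (Nat.eq_dec j m). subst. assert (0 <= ssum m f) by (apply ssum_nonneg; auto). lra.
  assert (0 <= f m) by auto. assert (f j <= ssum m f) by (apply IHm; auto; lia). lra.
Qed.

Fixpoint wmax (k : nat) (f : nat -> R) : R := match k with O => f O | S k' => Rmax (wmax k' f) (f (S k')) end.
Fixpoint wmin (k : nat) (f : nat -> R) : R := match k with O => f O | S k' => Rmin (wmin k' f) (f (S k')) end.

Lemma wmax_ge k f i : (i <= k)%nat -> f i <= wmax k f.
Proof.
  induction k; simpl; intros H. replace i with O by lia. lra.
  destruct (Nat.eq_dec i (S k)). subst. apply Rmax_r.
  eapply Rle_trans. apply IHk; lia. apply Rmax_l.
Qed.

Lemma wmin_le k f i : (i <= k)%nat -> wmin k f <= f i.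
Proof.
  induction k; simpl; intros H. replace i with O by lia. lra.
  destruct (Nat.eq_dec i (S k)). subst. apply Rmin_r.
  eapply Rle_trans. apply Rmin_l. apply IHk; lia.
Qed.

Lemma wmax_att k f : exists i, (i <= k)%nat /\ f i = wmax k f.
Proof.
  induction k; simpl. exists O; auto.
  destruct IHk as [i [Hi Hfi]]. unfold Rmax. destruct (Rle_dec (wmax k f) (f (S k))).
  exists (S k); auto. exists i; split; auto.
Qed.

Lemma wmin_att k f : exists i, (i <= k)%nat /\ f i = wmin k f.
Proof.
  induction k; simpl. exists O; auto.
  destruct IHk as [i [Hi Hfi]]. unfold Rmin. destruct (Rle_dec (wmin k f) (f (S k))).
  exists i; split; auto. exists (S k); auto.
Qed.

Lemma convex_upper s (om v : nat -> R) lam U j dl :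
  ssum s om = 1 -> (forall i, (i < s)%nat -> lam <= om i) -> 0 <= lam ->
  (forall i, (i < s)%nat -> v i <= U) -> (j < s)%nat -> v j <= U - dl -> 0 <= dl ->
  ssum s (fun i => om i * v i) <= U - lam * dl.
Proof.
  intros Hs Hl Hl0 Hv Hj Hvj Hdl.
  replace (ssum s (fun i => om i * v i)) with (U * ssum s om - ssum s (fun i => om i * (U - v i))).
  2: { rewrite <- ssum_scal, <- ssum_minus. apply ssum_ext. intros; ring. }
  rewrite Hs.
  assert (om j * (U - v j) <= ssum s (fun i => om i * (U - v i))).
  { apply (ssum_ge_term s (fun i => om i * (U - v i))); auto.
    intros i Hi. apply Rmult_le_pos. specialize (Hl i Hi). lra. specialize (Hv i Hi). lra. }
  assert (lam * dl <= om j * (U - v j)) by (apply Rmult_le_compat; auto; specialize (Hl j Hj); lra).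
  lra.
Qed.

Section Block.
Variables (s1 : nat) (om : nat -> R) (lam : R) (w e : nat -> R).
Hypothesis Hsum : ssum (S s1) om = 1.
Hypothesis Hlam : forall i, (i < S s1)%nat -> lam <= om i.
Hypothesis Hlam0 : 0 <= lam.
Hypothesis Hlam1 : lam <= 1.
Hypothesis Hrec : forall n, w (n + S s1)%nat = ssum (S s1) (fun i => om i * w (n + i)%nat) + e n.

Lemma block_upper N m M eta :
  (forall i, (i <= s1)%nat -> m <= w (N + i)%nat <= M) -> (exists j, (j <= s1)%nat /\ w (N + j)%nat = m) ->
  (forall k, (k <= s1)%nat -> Rabs (e (N + k)%nat) <= eta) ->
  forall k, (k <= s1)%nat -> w (N + S s1 + k)%nat <= M + INR (S k) * eta - lam ^ (S k) * (M - m).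
Proof.
  intros Hwin [j [Hj Hwj]] He.
  assert (HmM : m <= M) by (destruct (Hwin O ltac:(lia)); lra).
  assert (Heta : 0 <= eta) by (pose proof (He O ltac:(lia)); pose proof (Rabs_pos (e (N + 0)%nat)); lra).
  intros k. induction k as [k IH] using Wf_nat.lt_wf_ind. intros Hk.
  replace (N + S s1 + k)%nat with ((N + k) + S s1)%nat by lia.
  rewrite Hrec.
  assert (Hek : e (N + k)%nat <= eta) by (pose proof (He k Hk); pose proof (Rle_abs (e (N + k)%nat)); lra).
  assert (Hpl : 0 <= lam ^ k * (M - m)) by (apply Rmult_le_pos; [apply pow_le|]; lra).
  assert (Hv : forall i, (i < S s1)%nat -> w (N + k + i)%nat <= M + INR k * eta).
  { intros i Hi. destruct (Compare_dec.le_lt_dec (S s1) (k + i)) as [Hge|Hlt].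
    - set (k' := (k + i - S s1)%nat).
      replace (N + k + i)%nat with (N + S s1 + k')%nat by (unfold k'; lia).
      assert (Hk' : (k' < k)%nat) by (unfold k'; lia).
      eapply Rle_trans. apply IH; auto; lia.
      assert (0 <= lam ^ S k' * (M - m)) by (apply Rmult_le_pos; [apply pow_le|]; lra).
      assert (INR (S k') <= INR k) by (apply le_INR; lia).
      assert (INR (S k') * eta <= INR k * eta) by (apply Rmult_le_compat_r; auto). lra.
    - replace (N + k + i)%nat with (N + (k + i))%nat by lia.
      destruct (Hwin (k + i)%nat ltac:(lia)). assert (0 <= INR k * eta) by (apply Rmult_le_pos; auto; apply pos_INR). lra. }
  destruct k as [|k0].
  - assert (Hc := convex_upper (S s1) om (fun i => w (N + 0 + i)%nat) lam (M + INR 0 * eta) j (M - m) Hsum Hlam Hlam0 Hv ltac:(lia)).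
    assert (Hc' : ssum (S s1) (fun i => om i * w (N + 0 + i)%nat) <= M + INR 0 * eta - lam * (M - m)).
    { apply Hc; [|lra]. simpl. replace (N + 0 + j)%nat with (N + j)%nat by lia. rewrite Hwj. simpl INR. lra. }
    simpl INR in *. simpl pow. lra.
  - assert (Hprev : w (N + S k0 + s1)%nat <= M + INR (S k0) * eta - lam ^ (S k0) * (M - m)).
    { replace (N + S k0 + s1)%nat with (N + S s1 + k0)%nat by lia. apply IH; lia. }
    assert (Hc := convex_upper (S s1) om (fun i => w (N + S k0 + i)%nat) lam (M + INR (S k0) * eta) s1 (lam ^ (S k0) * (M - m)) Hsum Hlam Hlam0 Hv ltac:(lia)).
    cbv beta in Hc. assert (Hc' : ssum (S s1) (fun i => om i * w (N + S k0 + i)%nat) <= M + INR (S k0) * eta - lam * (lam ^ S k0 * (M - m))).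
    { apply Hc. exact Hprev. auto. }
    rewrite S_INR with (n := S k0). 
    replace (lam ^ S (S k0) * (M - m)) with (lam * (lam ^ S k0 * (M - m))) by (simpl; ring).
    lra.
Qed.
End Block.

Lemma pow_le1 lam n : 0 <= lam <= 1 -> lam ^ n <= 1.
Proof. intros H. induction n; simpl. lra. assert (0 <= lam ^ n) by (apply pow_le; lra). nra. Qed.

Lemma pow_decr lam k n : 0 <= lam <= 1 -> (k <= n)%nat -> lam ^ n <= lam ^ k.
Proof.
  intros Hl Hkn. replace n with (k + (n - k))%nat by lia. rewrite pow_add.
  assert (0 <= lam ^ k) by (apply pow_le; lra).
  assert (lam ^ (n - k) <= 1) by (apply pow_le1; lra). nra.
Qed.

Section Spread.
Variables (s1 : nat) (om : nat -> R) (lam : R) (w e : nat -> R).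
Hypothesis Hsum : ssum (S s1) om = 1.
Hypothesis Hlam : forall i, (i < S s1)%nat -> lam <= om i.
Hypothesis Hlam0 : 0 <= lam.
Hypothesis Hlam1 : lam <= 1.
Hypothesis Hrec : forall n, w (n + S s1)%nat = ssum (S s1) (fun i => om i * w (n + i)%nat) + e n.

Definition Wf N := fun i => w (N + i)%nat.
Definition Dsp N := wmax s1 (Wf N) - wmin s1 (Wf N).

Lemma Dsp_nonneg N : 0 <= Dsp N.
Proof. unfold Dsp. pose proof (wmax_ge s1 (Wf N) 0 ltac:(lia)). pose proof (wmin_le s1 (Wf N) 0 ltac:(lia)). lra. Qed.

Lemma spread_step N eta : (forall k, (k <= s1)%nat -> Rabs (e (N + k)%nat) <= eta) ->
  Dsp (N + S s1) <= (1 - 2 * lam ^ (S s1)) * Dsp N + 2 * INR (S s1) * eta.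
Proof.
  intros He.
  set (M := wmax s1 (Wf N)). set (m := wmin s1 (Wf N)).
  assert (Hwin : forall i, (i <= s1)%nat -> m <= w (N + i)%nat <= M).
  { intros i Hi. split. apply (wmin_le s1 (Wf N) i Hi). apply (wmax_ge s1 (Wf N) i Hi). }
  assert (Hmin : exists j, (j <= s1)%nat /\ w (N + j)%nat = m) by (apply (wmin_att s1 (Wf N))).
  assert (Hmax : exists j, (j <= s1)%nat /\ w (N + j)%nat = M) by (apply (wmax_att s1 (Wf N))).
  assert (Heta : 0 <= eta) by (pose proof (He O ltac:(lia)); pose proof (Rabs_pos (e (N + 0)%nat)); lra).
  assert (HmM : m <= M) by (destruct (Hwin O ltac:(lia)); lra).
  assert (Up := block_upper s1 om lam w e Hsum Hlam Hlam0 Hrec N m M eta Hwin Hmin He).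
  assert (Hrec' : forall n, (fun k => - w k) (n + S s1)%nat = ssum (S s1) (fun i => om i * (fun k => - w k) (n + i)%nat) + (fun k => - e k) n).
  { intros n. cbv beta. rewrite Hrec. replace (ssum (S s1) (fun i => om i * - w (n + i)%nat)) with ((-1) * ssum (S s1) (fun i => om i * w (n + i)%nat)). ring.
    rewrite <- ssum_scal. apply ssum_ext. intros; ring. }
  assert (Lo := block_upper s1 om lam (fun k => - w k) (fun k => - e k) Hsum Hlam Hlam0 Hrec' N (- M) (- m) eta).
  assert (Hs : forall k, (k <= s1)%nat -> lam ^ S s1 <= lam ^ S k) by (intros; apply pow_decr; lia || lra).
  assert (Hs2 : forall k, (k <= s1)%nat -> INR (S k) * eta <= INR (S s1) * eta) by (intros; apply Rmult_le_compat_r; auto; apply le_INR; lia).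
  assert (HU : forall k, (k <= s1)%nat -> w (N + S s1 + k)%nat <= M + INR (S s1) * eta - lam ^ (S s1) * (M - m)).
  { intros k Hk. specialize (Up k Hk). specialize (Hs k Hk). specialize (Hs2 k Hk).
    assert (lam ^ S s1 * (M - m) <= lam ^ S k * (M - m)) by (apply Rmult_le_compat_r; lra). lra. }
  assert (HL : forall k, (k <= s1)%nat -> m - INR (S s1) * eta + lam ^ (S s1) * (M - m) <= w (N + S s1 + k)%nat).
  { intros k Hk. assert (Lo' : - w (N + S s1 + k)%nat <= - m + INR (S k) * eta - lam ^ S k * (- m - - M)).
    { apply Lo; auto.
      - intros i Hi. destruct (Hwin i Hi). lra.
      - destruct Hmax as [j [Hj Hwj]]. exists j. split; auto. rewrite Hwj; auto.
      - intros k0 Hk0. rewrite Rabs_Ropp. apply He; auto. }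
    specialize (Hs k Hk). specialize (Hs2 k Hk).
    assert (lam ^ S s1 * (M - m) <= lam ^ S k * (M - m)) by (apply Rmult_le_compat_r; lra). lra. }
  unfold Dsp at 1.
  destruct (wmax_att s1 (Wf (N + S s1))) as [i1 [Hi1 Hw1]]. destruct (wmin_att s1 (Wf (N + S s1))) as [i2 [Hi2 Hw2]].
  rewrite <- Hw1, <- Hw2. unfold Wf. specialize (HU i1 Hi1). specialize (HL i2 Hi2).
  fold M m. unfold Dsp. fold M m. lra.
Qed.

Lemma spread_iter N0 eta : (forall n, (N0 <= n)%nat -> Rabs (e n) <= eta) -> 0 < lam -> lam <= 1/2 ->
  forall k, Dsp (N0 + k * S s1) <= (1 - 2 * lam ^ (S s1)) ^ k * Dsp N0 + INR (S s1) * eta / lam ^ (S s1).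
Proof.
  intros He Hl0 Hl.
  assert (Hp : 0 < lam ^ S s1) by (apply pow_lt; lra).
  assert (Hp2 : lam ^ S s1 <= 1/2) by (pose proof (pow_decr lam 1 (S s1) ltac:(lra) ltac:(lia)); rewrite pow_1 in H; lra).
  assert (Heta : 0 <= eta) by (pose proof (He N0 (le_n _)); pose proof (Rabs_pos (e N0)); lra).
  assert (HC : 0 <= INR (S s1) * eta / lam ^ S s1) by (unfold Rdiv; apply Rmult_le_pos; [apply Rmult_le_pos; auto; apply pos_INR|left; apply Rinv_0_lt_compat; auto]).
  induction k as [|k IH].
  - rewrite Nat.mul_0_l, Nat.add_0_r, pow_O. lra.
  - replace (N0 + S k * S s1)%nat with ((N0 + k * S s1) + S s1)%nat by lia.
    eapply Rle_trans. apply spread_step. intros j Hj. apply He. lia.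
    assert (Hth : 0 <= 1 - 2 * lam ^ S s1) by lra.
    apply Rle_trans with ((1 - 2 * lam ^ S s1) * ((1 - 2 * lam ^ S s1) ^ k * Dsp N0 + INR (S s1) * eta / lam ^ S s1) + 2 * INR (S s1) * eta).
    apply Rplus_le_compat_r. apply Rmult_le_compat_l; auto.
    right. set (q := lam ^ S s1) in *. change ((1 - 2 * q) ^ S k) with ((1 - 2 * q) * (1 - 2 * q) ^ k). field. lra.
Qed.
End Spread.

Lemma ssum_telescope (b : nat -> R) m :
  ssum m (fun i => b i - match i with O => 0 | S i' => b i' end) = match m with O => 0 | S m' => b m' end.
Proof.
  induction m as [|m IH]; simpl. auto. rewrite IH. destruct m; simpl; ring.
Qed.

Lemma shift_identity (b w : nat -> R) n m :
  ssum m (fun i => b i * w (n + 1 + i)%nat) - ssum m (fun i => b i * w (n + i)%nat) =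
  (match m with O => 0 | S m' => b m' end) * w (n + m)%nat -
  ssum m (fun i => (b i - match i with O => 0 | S i' => b i' end) * w (n + i)%nat).
Proof.
  induction m as [|m IH]. simpl; ring.
  simpl ssum. replace (n + 1 + m)%nat with (n + S m)%nat by lia.
  set (bm := match m with O => 0 | S m' => b m' end) in *.
  assert (IH2 : ssum m (fun i => b i * w (n + 1 + i)%nat) = ssum m (fun i => b i * w (n + i)%nat) + bm * w (n + m)%nat - ssum m (fun i => (b i - match i with O => 0 | S i' => b i' end) * w (n + i)%nat)) by lra.
  rewrite IH2. fold bm. ring.
Qed.

Theorem stability (s1 : nat) (b z c : nat -> R) (lam L : R) :
  b s1 = 1 -> 0 < lam -> lam <= b O -> (forall i, (i < s1)%nat -> lam <= b (S i) - b i) ->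
  (forall n, ssum (S s1) (fun i => b i * z (n + i)%nat) = c n) -> is_lim_seq c L ->
  is_lim_seq z (L / ssum (S s1) b).
Proof.
  intros Hb1 Hl0 Hlb0 Hlb Hlev Hc.
  assert (Hbpos : forall i, (i <= s1)%nat -> lam <= b i).
  { induction i; intros Hi. auto. specialize (IHi ltac:(lia)). specialize (Hlb i ltac:(lia)). lra. }
  set (B := ssum (S s1) b).
  assert (HB : 0 < B).
  { unfold B. simpl. assert (0 <= ssum s1 b) by (apply ssum_nonneg; intros i Hi; specialize (Hbpos i ltac:(lia)); lra). lra. }
  set (w := fun n => z n - L / B).
  set (eps := fun n => c n - L).
  assert (Hlevw : forall n, ssum (S s1) (fun i => b i * w (n + i)%nat) = eps n).
  { intros n. unfold w, eps. rewrite <- (Hlev n).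
    replace (ssum (S s1) (fun i => b i * (z (n + i)%nat - L / B))) with (ssum (S s1) (fun i => b i * z (n + i)%nat) - L / B * ssum (S s1) b).
    fold B. field. lra.
    rewrite <- ssum_scal, <- ssum_minus. apply ssum_ext. intros; ring. }
  set (om := fun i => b i - match i with O => 0 | S i' => b i' end).
  assert (Hsum : ssum (S s1) om = 1) by (unfold om; rewrite ssum_telescope; auto).
  set (lam' := Rmin lam (1/2)).
  assert (Hl'0 : 0 < lam') by (apply Rmin_pos; lra).
  assert (Hl'1 : lam' <= 1/2) by apply Rmin_r.
  assert (Hlam : forall i, (i < S s1)%nat -> lam' <= om i).
  { intros i Hi. unfold om. apply Rle_trans with lam. apply Rmin_l. destruct i. lra. apply Hlb. lia. }
  set (e := fun n => eps (S n) - eps n).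
  assert (Hrec : forall n, w (n + S s1)%nat = ssum (S s1) (fun i => om i * w (n + i)%nat) + e n).
  { intros n. unfold e. rewrite <- !Hlevw.
    replace (S n) with (n + 1)%nat by lia.
    pose proof (shift_identity b w n (S s1)) as Hs. cbv iota beta in Hs. rewrite Hb1 in Hs. fold om in Hs.
    assert (Ho : ssum (S s1) (fun i => (b i - match i with O => 0 | S i' => b i' end) * w (n + i)%nat) = ssum (S s1) (fun i => om i * w (n + i)%nat)) by reflexivity. rewrite Rmult_1_l in Hs. lra. }
  apply is_lim_seq_spec. intros tau.
  set (th := 1 - 2 * lam' ^ S s1).
  assert (Hp : 0 < lam' ^ S s1) by (apply pow_lt; lra).
  assert (Hp2 : lam' ^ S s1 <= 1/2) by (pose proof (pow_decr lam' 1 (S s1) ltac:(lra) ltac:(lia)); rewrite pow_1 in H; lra).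
  assert (Hth : 0 <= th < 1) by (unfold th; lra).
  set (eta0 := tau * lam' ^ S s1 / (4 * INR (S s1))).
  assert (HS : 0 < INR (S s1)) by (apply lt_0_INR; lia).
  assert (Heta0 : 0 < eta0) by (unfold eta0; apply Rmult_lt_0_compat; [apply Rmult_lt_0_compat; [apply cond_pos|auto]|apply Rinv_0_lt_compat; lra]).
  assert (Hx : 0 < Rmin (eta0 / 2) (tau * B / 4)) by (apply Rmin_pos; [lra|apply Rmult_lt_0_compat; [apply Rmult_lt_0_compat; [apply cond_pos|auto]|lra]]).
  apply is_lim_seq_spec in Hc. destruct (Hc (mkposreal _ Hx)) as [N0 HN0]. simpl in HN0.
  assert (Heps : forall n, (N0 <= n)%nat -> Rabs (eps n) < Rmin (eta0 / 2) (tau * B / 4)) by (intros; apply HN0; auto).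
  assert (He : forall n, (N0 <= n)%nat -> Rabs (e n) <= eta0).
  { intros n Hn. unfold e. pose proof (Heps n Hn). pose proof (Heps (S n) ltac:(lia)).
    pose proof (Rmin_l (eta0 / 2) (tau * B / 4)).
    unfold Rminus. eapply Rle_trans. apply Rabs_triang. rewrite Rabs_Ropp. lra. }
  assert (Hit := spread_iter s1 om lam' w e Hsum Hlam ltac:(lra) ltac:(lra) Hrec N0 eta0 He Hl'0 Hl'1).
  set (D0 := Dsp s1 w N0).
  assert (HD0 : 0 <= D0) by apply Dsp_nonneg.
  destruct (pow_lt_1_zero th ltac:(rewrite Rabs_right; lra) (tau / (4 * (D0 + 1)))) as [K HK].
  { apply Rmult_lt_0_compat. apply cond_pos. apply Rinv_0_lt_compat. lra. }
  exists (N0 + K * S s1)%nat. intros n Hn.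
  set (k := ((n - N0) / S s1)%nat). set (i := ((n - N0) mod S s1)%nat).
  assert (Hdm : (n - N0 = S s1 * k + i)%nat) by (apply Nat.div_mod; lia).
  assert (Hi : (i < S s1)%nat) by (apply Nat.mod_upper_bound; lia).
  assert (HkK : (K <= k)%nat).
  { unfold k. apply Nat.div_le_lower_bound. lia. lia. }
  set (N := (N0 + k * S s1)%nat).
  assert (HnN : n = (N + i)%nat) by (unfold N; lia).
  assert (HDN : Dsp s1 w N <= tau / 2).
  { unfold N. eapply Rle_trans. apply Hit.
    specialize (HK k HkK). rewrite Rabs_right in HK by (apply Rle_ge, pow_le; lra).
    assert (th ^ k * D0 <= tau / 4).
    { apply Rle_trans with (tau / (4 * (D0 + 1)) * D0). apply Rmult_le_compat_r; auto; lra.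
      apply Rle_trans with (tau / (4 * (D0 + 1)) * (D0 + 1)). apply Rmult_le_compat_l. left; apply Rmult_lt_0_compat. apply cond_pos. apply Rinv_0_lt_compat. lra. lra.
      right. field. lra. }
    fold th D0. replace (INR (S s1) * eta0 / lam' ^ S s1) with (tau / 4) by (unfold eta0; field; lra). lra. }
  set (M := wmax s1 (Wf w N)). set (m := wmin s1 (Wf w N)).
  assert (Hwin : forall j, (j <= s1)%nat -> m <= w (N + j)%nat <= M).
  { intros j Hj. split. apply (wmin_le s1 (Wf w N) j Hj). apply (wmax_ge s1 (Wf w N) j Hj). }
  assert (HlevN := Hlevw N).
  assert (Hlo : B * m <= eps N).
  { rewrite <- HlevN.
    replace (B * m) with (ssum (S s1) (fun i => b i * m)) by (unfold B; rewrite Rmult_comm, <- ssum_scal; apply ssum_ext; intros; ring).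
    apply ssum_le. intros j Hj. specialize (Hbpos j ltac:(lia)). apply Rmult_le_compat_l; [lra | apply Hwin; lia]. }
  assert (Hhi : eps N <= B * M).
  { rewrite <- HlevN.
    replace (B * M) with (ssum (S s1) (fun i => b i * M)) by (unfold B; rewrite Rmult_comm, <- ssum_scal; apply ssum_ext; intros; ring).
    apply ssum_le. intros j Hj. specialize (Hbpos j ltac:(lia)). apply Rmult_le_compat_l; [lra | apply Hwin; lia]. }
  assert (HepsN : Rabs (eps N) < tau * B / 4) by (eapply Rlt_le_trans; [apply Heps; unfold N; lia|apply Rmin_r]).
  assert (HDdef : Dsp s1 w N = M - m) by reflexivity.
  assert (Hwn := Hwin i ltac:(lia)). rewrite <- HnN in Hwn.
  assert (Hm1 : m <= eps N / B) by (apply (Rmult_le_reg_l B); auto; field_simplify; lra).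
  assert (Hm2 : eps N / B <= M) by (apply (Rmult_le_reg_l B); auto; field_simplify; lra).
  assert (Heb : Rabs (eps N / B) < tau / 4).
  { unfold Rdiv. rewrite Rabs_mult, Rabs_inv, (Rabs_right B) by lra.
    apply (Rmult_lt_reg_r B); auto. rewrite Rmult_assoc, Rinv_l by lra. lra. }
  fold (w n). apply Rabs_def2 in Heb. apply Rabs_def1; lra.
Qed.

Lemma f_bounds (f : R -> R) alpha rI : f alpha = 0 -> 0 < rI ->
  (forall x, Rabs (x - alpha) < rI -> ex_derive f x) ->
  (forall x, Rabs (x - alpha) < rI -> Rabs (Derive f x - Derive f alpha) < Rabs (Derive f alpha) / 2) ->
  forall x, Rabs (x - alpha) < rI ->
   Rabs (Derive f alpha) / 2 * Rabs (x - alpha) <= Rabs (f x) <= 3 * Rabs (Derive f alpha) / 2 * Rabs (x - alpha).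
Proof.
  intros Hfa HrI Hd Hb x Hx.
  assert (key : forall c, Rabs (c - alpha) < rI -> Rabs (Derive f alpha) / 2 <= Rabs (Derive f c) <= 3 * Rabs (Derive f alpha) / 2).
  { intros c Hc. specialize (Hb c Hc). pose proof (Rabs_triang_inv (Derive f c) (Derive f alpha)).
    pose proof (Rabs_triang_inv (Derive f alpha) (Derive f c)). rewrite Rabs_minus_sym in H0. split; lra. }
  destruct (Rtotal_order x alpha) as [Hlt|[Heq|Hgt]].
  - destruct (mvt_C f x alpha Hlt) as [c [Hc Hc2]].
    { intros z Hz. apply Hd. apply Rabs_def2 in Hx. apply Rabs_def1; lra. }
    assert (Rabs (c - alpha) < rI) by (apply Rabs_def2 in Hx; apply Rabs_def1; lra).
    rewrite Hfa in Hc2. replace (f x) with (- (Derive f c * (alpha - x))) by lra.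
    rewrite Rabs_Ropp, Rabs_mult. rewrite (Rabs_minus_sym x alpha). specialize (key c H).
    pose proof (Rabs_pos (alpha - x)). split; apply Rmult_le_compat_r; lra.
  - subst. rewrite Hfa, Rminus_diag, !Rabs_R0. lra.
  - destruct (mvt_C f alpha x Hgt) as [c [Hc Hc2]].
    { intros z Hz. apply Hd. apply Rabs_def2 in Hx. apply Rabs_def1; lra. }
    assert (Rabs (c - alpha) < rI) by (apply Rabs_def2 in Hx; apply Rabs_def1; lra).
    rewrite Hfa in Hc2. replace (f x) with (Derive f c * (x - alpha)) by lra.
    rewrite Rabs_mult. specialize (key c H).
    pose proof (Rabs_pos (x - alpha)). split; apply Rmult_le_compat_r; lra.
Qed.

Lemma pow_small_aux m tau : 0 <= tau <= 1 -> (1 + tau) ^ m - 1 <= tau * INR m * 2 ^ m.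
Proof.
  intros Ht. induction m as [|m IH]. simpl. lra.
  rewrite S_INR. simpl pow.
  assert (0 <= (1 + tau) ^ m - 1) by (pose proof (pow_R1_Rle (1 + tau) m ltac:(lra)); lra).
  assert (0 <= 2 ^ m) by (apply pow_le; lra). assert (1 <= 2 ^ m) by (apply pow_R1_Rle; lra).
  assert (0 <= INR m) by apply pos_INR.
  replace ((1 + tau) * (1 + tau) ^ m - 1) with ((1 + tau) * ((1 + tau) ^ m - 1) + tau) by ring.
  apply Rle_trans with (2 * (tau * INR m * 2 ^ m) + tau).
  apply Rplus_le_compat_r. apply Rmult_le_compat; lra.
  nra.
Qed.

Lemma pow_small m eps : 0 < eps -> exists tau, 0 < tau <= 1 /\ (1 + tau) ^ m - 1 <= eps.
Proof.
  intros He. set (K := INR m * 2 ^ m + 1).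
  assert (HK : 1 <= K) by (unfold K; pose proof (pos_INR m); assert (0 <= 2 ^ m) by (apply pow_le; lra); nra).
  exists (Rmin 1 (eps / K)). assert (0 < eps / K) by (apply Rdiv_lt_0_compat; lra).
  split. split. apply Rmin_pos; lra. apply Rmin_l.
  eapply Rle_trans. apply pow_small_aux. split. left; apply Rmin_pos; lra. apply Rmin_l.
  apply Rle_trans with (eps / K * (INR m * 2 ^ m)).
  rewrite Rmult_assoc. apply Rmult_le_compat_r. apply Rmult_le_pos. apply pos_INR. apply pow_le; lra. apply Rmin_r.
  replace (INR m * 2 ^ m) with (K - 1) by (unfold K; ring).
  assert (eps / K * (K - 1) = eps - eps / K) by (field; lra). lra.
Qed.

Lemma is_lim_seq_ssum m (u : nat -> nat -> R) (l : nat -> R) :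
  (forall k, (k < m)%nat -> is_lim_seq (u k) (l k)) -> is_lim_seq (fun n => ssum m (fun k => u k n)) (ssum m l).
Proof.
  induction m as [|m IH]; intros H; simpl.
  - apply is_lim_seq_const.
  - apply (is_lim_seq_plus' (fun n => ssum m (fun k => u k n)) (u m)). apply IH. intros; apply H; lia. apply H; lia.
Qed.

Lemma Tg_rec i p : 0 < p -> p * Tg (S i) p = 1 + Tg i p.
Proof.
  intros Hp. induction i as [|i IH]. simpl. field. lra.
  change (Tg (S (S i)) p) with (Tg (S i) p + / p ^ (S (S i))).
  change (Tg (S i) p) with (Tg i p + / p ^ (S i)) at 2.
  rewrite Rmult_plus_distr_l, IH.
  replace (p * / p ^ S (S i)) with (/ p ^ S i). ring.
  change (p ^ S (S i)) with (p * p ^ S i). field. split; [apply pow_nonzero|]; lra.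
Qed.

Lemma ssum_S m f : ssum (S m) f = ssum m f + f m.
Proof. reflexivity. Qed.

Lemma Y_identity (Y : nat -> R) p n N : 0 < p ->
  ssum N (fun i => Tg (S i) p * (Y (n + i + 1)%nat - p * Y (n + i)%nat)) = Tg N p * Y (n + N)%nat - ssum N (fun i => Y (n + i)%nat).
Proof.
  intros Hp. induction N as [|N IH].
  - simpl. ring.
  - rewrite !ssum_S. rewrite IH. replace (n + N + 1)%nat with (n + S N)%nat by lia.
    replace (Tg (S N) p * (Y (n + S N)%nat - p * Y (n + N)%nat)) with (Tg (S N) p * Y (n + S N)%nat - (p * Tg (S N) p) * Y (n + N)%nat) by ring.
    rewrite Tg_rec by lra. ring.
Qed.

Section Conv.
Variables (s1 : nat) (f g : R -> R) (alpha rI r0 rho1 : R).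
Hypothesis Hf : smooth f.
Hypothesis Hfa : f alpha = 0.
Hypothesis Hd : Derive f alpha <> 0.
Hypothesis HrI : 0 < rI.
Hypothesis Hr0 : 0 < r0.
Hypothesis Hdb : forall x, Rabs (x - alpha) < rI -> Rabs (Derive f x - Derive f alpha) < Rabs (Derive f alpha) / 2.
Hypothesis HCg : forall n, Cn n g (fun y => Rabs y < r0).
Hypothesis HDg : forall y, Rabs y < r0 -> Derive g y = / Derive f (g y).
Hypothesis Hgf : forall x, Rabs (x - alpha) < rI -> Rabs (f x) < r0 -> g (f x) = x.
Hypothesis Hg0 : g 0 = alpha.
Hypothesis Hrho1 : 0 < rho1.
Hypothesis Hrho1b : rho1 < r0.

Definition Ac := Derive_n (Derive g) (S s1) 0 / INR (Factorial.fact (S s1)).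
Hypothesis HA : Ac <> 0.

Hypothesis Hstep : forall (y : nat -> R) c tau, 0 <= tau -> (forall k, (k < S s1)%nat -> Rabs (y k) < rho1) ->
   (forall i j, (i < S s1)%nat -> (j < S s1)%nat -> i <> j -> y i <> y j) ->
   (forall k, (k < S s1)%nat -> Derive (poly_eval c (S s1)) (y k) = Derive g (y k)) ->
   Rabs ((g 0 - poly_eval c (S s1) 0) - (g (y s1) - poly_eval c (S s1) (y s1))) <=
     (Rabs Ac + 1) * (2 * rho1) ^ s1 * (y s1 * y s1) / 2.

Lemma sq_abs u : Rabs u * Rabs u = u * u.
Proof. rewrite <- Rabs_mult. apply Rabs_right. nra. Qed.

Definition Lc := 3 * Rabs (Derive f alpha) / 2.
Definition C1 := (Rabs Ac + 1) * (2 * rho1) ^ s1 / 2 * (Lc * Lc).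
Definition delta := Rmin rI (Rmin (rho1 / Lc) (1 / (2 * C1 + 1))).

Lemma Lc_pos : 0 < Lc.
Proof. unfold Lc. assert (0 < Rabs (Derive f alpha)) by (apply Rabs_pos_lt; auto). lra. Qed.

Lemma C1_nonneg : 0 <= C1.
Proof.
  unfold C1. apply Rmult_le_pos. apply Rmult_le_pos. apply Rmult_le_pos.
  pose proof (Rabs_pos Ac); lra. apply pow_le; lra. lra. pose proof Lc_pos; nra.
Qed.

Lemma delta_pos : 0 < delta.
Proof.
  unfold delta. pose proof Lc_pos. pose proof C1_nonneg.
  apply Rmin_pos; auto. apply Rmin_pos. apply Rdiv_lt_0_compat; auto. apply Rdiv_lt_0_compat; lra.
Qed.

Lemma delta_rI : delta <= rI.
Proof. apply Rmin_l. Qed.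

Lemma delta_rho : Lc * delta <= rho1.
Proof.
  unfold delta. pose proof Lc_pos.
  apply Rle_trans with (Lc * (rho1 / Lc)). apply Rmult_le_compat_l. lra.
  eapply Rle_trans. apply Rmin_r. apply Rmin_l. right; field; lra.
Qed.

Lemma delta_C1 : C1 * delta < 1 / 2.
Proof.
  pose proof C1_nonneg.
  assert (delta <= 1 / (2 * C1 + 1)) by (unfold delta; eapply Rle_trans; apply Rmin_r || apply Rmin_r; apply Rmin_r).
  apply Rle_lt_trans with (C1 * (1 / (2 * C1 + 1))). apply Rmult_le_compat_l; auto.
  apply (Rmult_lt_reg_r (2 * C1 + 1)). lra. field_simplify; lra.
Qed.

Lemma fbnd x : Rabs (x - alpha) < rI ->
   Rabs (Derive f alpha) / 2 * Rabs (x - alpha) <= Rabs (f x) <= Lc * Rabs (x - alpha).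
Proof.
  intros Hx. unfold Lc. apply f_bounds with rI; auto. intros; apply (Hf 1%nat).
Qed.

Variable x : nat -> R.
Hypothesis Hab : AB_sequence f (S s1) x.
Hypothesis Hinit : forall k, (k < S s1)%nat -> Rabs (x k - alpha) < delta.
Hypothesis Hne : forall l, x l <> alpha.
Hypothesis Hdist : forall n i j, (i < j)%nat -> (j < S s1)%nat -> f (x (n + i)%nat) <> f (x (n + j)%nat).

Definition e l := x l - alpha.

Lemma small_facts l : Rabs (e l) < delta ->
  Rabs (e l) < rI /\ Rabs (f (x l)) < rho1 /\ Rabs (f (x l)) <= Lc * Rabs (e l) /\
  Rabs (Derive f alpha) / 2 * Rabs (e l) <= Rabs (f (x l)) /\ f (x l) <> 0 /\ g (f (x l)) = x l.
Proof.
  intros H. pose proof delta_rI. pose proof delta_rho. pose proof Lc_pos.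
  assert (Hl1 : Rabs (e l) < rI) by lra.
  destruct (fbnd (x l) Hl1) as [Hlo Hhi]. fold (e l) in Hlo, Hhi.
  assert (Rabs (f (x l)) < rho1).
  { eapply Rle_lt_trans. apply Hhi. apply Rlt_le_trans with (Lc * delta); auto. apply Rmult_lt_compat_l; auto. }
  assert (Hep : 0 < Rabs (e l)) by (apply Rabs_pos_lt; unfold e; intro; apply (Hne l); lra).
  assert (0 < Rabs (Derive f alpha)) by (apply Rabs_pos_lt; auto).
  split; auto. split; auto. split; auto. split; auto. split.
  - intro Hz. rewrite Hz, Rabs_R0 in Hlo. nra.
  - apply Hgf; auto. lra.
Qed.

Lemma window_step n : (forall k, (k < S s1)%nat -> Rabs (e (n + k)%nat) < delta) ->
  exists c, (forall k, (k < S s1)%nat -> Derive (poly_eval c (S s1)) (f (x (n + k)%nat)) = Derive g (f (x (n + k)%nat))) /\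
    (g 0 - poly_eval c (S s1) 0) - (g (f (x (n + s1)%nat)) - poly_eval c (S s1) (f (x (n + s1)%nat))) = - e (n + S s1)%nat.
Proof.
  intros Hw. destruct (Hab n) as [c [H1 [H2 H3]]]. exists c.
  replace (n + S s1 - 1)%nat with (n + s1)%nat in H1 by lia.
  split.
  - intros k Hk. rewrite H2 by auto. destruct (small_facts (n + k) (Hw k Hk)) as [_ [Hr [_ [_ [_ Hgx]]]]].
    rewrite HDg by lra. rewrite Hgx. reflexivity.
  - destruct (small_facts (n + s1) (Hw s1 ltac:(lia))) as [_ [Hr [_ [_ [_ Hgx]]]]].
    rewrite Hgx, H1, <- H3, Hg0. unfold e. ring.
Qed.

Lemma inj_window n : forall i j, (i < S s1)%nat -> (j < S s1)%nat -> i <> j -> f (x (n + i)%nat) <> f (x (n + j)%nat).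
Proof.
  intros i j Hi Hj Hij. destruct (Nat.lt_total i j) as [H|[H|H]].
  apply Hdist; auto. lia. intro Hc. symmetry in Hc. revert Hc. apply Hdist; auto.
Qed.

Lemma crude n : (forall k, (k < S s1)%nat -> Rabs (e (n + k)%nat) < delta) ->
  Rabs (e (n + S s1)%nat) <= C1 * (e (n + s1)%nat * e (n + s1)%nat).
Proof.
  intros Hw. destruct (window_step n Hw) as [c [Hint HE]].
  assert (Hs := Hstep (fun k => f (x (n + k)%nat)) c 0 ltac:(lra)).
  cbv beta in Hs. rewrite HE, Rabs_Ropp in Hs.
  assert (Hy : forall k, (k < S s1)%nat -> Rabs (f (x (n + k)%nat)) < rho1).
  { intros k Hk. apply (small_facts _ (Hw k Hk)). }
  specialize (Hs Hy (inj_window n) Hint).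
  destruct (small_facts (n + s1) (Hw s1 ltac:(lia))) as [_ [_ [Hb _]]].
  eapply Rle_trans. apply Hs. unfold C1.
  set (K := (Rabs Ac + 1) * (2 * rho1) ^ s1 / 2).
  assert (HK : 0 <= K) by (unfold K; apply Rmult_le_pos; [apply Rmult_le_pos; [pose proof (Rabs_pos Ac); lra|apply pow_le; lra]|lra]).
  replace ((Rabs Ac + 1) * (2 * rho1) ^ s1 * (f (x (n + s1)%nat) * f (x (n + s1)%nat)) / 2) with (K * (f (x (n + s1)%nat) * f (x (n + s1)%nat))) by (unfold K; field).
  replace (K * (Lc * Lc) * (e (n + s1)%nat * e (n + s1)%nat)) with (K * ((Lc * Rabs (e (n + s1)%nat)) * (Lc * Rabs (e (n + s1)%nat)))).
  2: { rewrite <- (sq_abs (e (n+s1)%nat)). ring. }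
  apply Rmult_le_compat_l; auto.
  rewrite <- sq_abs.
  apply Rmult_le_compat; try apply Rabs_pos; auto.
Qed.

Lemma all_small : forall l, Rabs (e l) < delta.
Proof.
  intros l. induction l as [l IH] using Wf_nat.lt_wf_ind.
  destruct (Compare_dec.lt_dec l (S s1)) as [Hl|Hl]. apply Hinit; auto.
  set (n := (l - S s1)%nat).
  assert (Hw : forall k, (k < S s1)%nat -> Rabs (e (n + k)%nat) < delta) by (intros k Hk; apply IH; unfold n; lia).
  replace l with (n + S s1)%nat by (unfold n; lia).
  eapply Rle_lt_trans. apply crude; auto.
  assert (Hs := Hw s1 ltac:(lia)). pose proof delta_C1. pose proof C1_nonneg.
  assert (0 <= Rabs (e (n + s1)%nat)) by apply Rabs_pos.
  rewrite <- (sq_abs (e (n + s1)%nat)).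
  assert (C1 * Rabs (e (n + s1)%nat) <= 1/2).
  { apply Rle_trans with (C1 * delta). apply Rmult_le_compat_l; lra. lra. }
  nra.
Qed.

Lemma dec_step n : Rabs (e (n + S s1)%nat) <= C1 * Rabs (e (n + s1)%nat) * Rabs (e (n + s1)%nat) /\
   Rabs (e (n + S s1)%nat) <= Rabs (e (n + s1)%nat) / 2.
Proof.
  assert (Hw : forall k, (k < S s1)%nat -> Rabs (e (n + k)%nat) < delta) by (intros; apply all_small).
  pose proof (crude n Hw) as Hc. rewrite <- (sq_abs (e (n + s1)%nat)) in Hc.
  split. lra.
  pose proof (all_small (n + s1)). pose proof delta_C1. pose proof C1_nonneg.
  assert (0 <= Rabs (e (n + s1)%nat)) by apply Rabs_pos.
  assert (C1 * Rabs (e (n + s1)%nat) <= 1/2).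
  { apply Rle_trans with (C1 * delta). apply Rmult_le_compat_l; lra. lra. }
  nra.
Qed.

Lemma mono_from i j : (s1 <= i)%nat -> (i <= j)%nat -> Rabs (e j) <= Rabs (e i).
Proof.
  intros Hi Hij. induction Hij. lra.
  eapply Rle_trans; [|apply IHHij].
  destruct (dec_step (m - s1)) as [_ H]. replace (m - s1 + S s1)%nat with (S m) in H by lia.
  replace (m - s1 + s1)%nat with m in H by lia. pose proof (Rabs_pos (e m)). lra.
Qed.

Lemma e_geom m : Rabs (e (s1 + m)%nat) <= (/ 2) ^ m * delta.
Proof.
  induction m. rewrite Nat.add_0_r. simpl. pose proof (all_small s1). lra.
  destruct (dec_step (s1 + m - s1)) as [_ H]. replace (s1 + m - s1 + S s1)%nat with (s1 + S m)%nat in H by lia.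
  replace (s1 + m - s1 + s1)%nat with (s1 + m)%nat in H by lia. simpl pow. lra.
Qed.

Lemma e_lim : is_lim_seq e 0.
Proof.
  apply (is_lim_seq_incr_n e s1).
  apply is_lim_seq_le_le with (u := fun m => - ((/ 2) ^ m * delta)) (w := fun m => (/ 2) ^ m * delta).
  - intros m. rewrite Nat.add_comm. pose proof (e_geom m).
    pose proof (Rle_abs (e (s1 + m)%nat)). pose proof (Rle_abs (- e (s1 + m)%nat)). rewrite Rabs_Ropp in *. lra.
  - apply is_lim_seq_ext with (fun m => (/ 2) ^ m * (- delta)). intros; ring.
    replace (Finite 0) with (Rbar_mult 0 (- delta)) by (simpl; f_equal; ring).
    apply (is_lim_seq_scal_r (fun m => (/ 2) ^ m) (- delta) 0). apply is_lim_seq_geom. rewrite Rabs_right; lra.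
  - replace (Finite 0) with (Rbar_mult 0 delta) by (simpl; f_equal; ring).
    apply (is_lim_seq_scal_r (fun m => (/ 2) ^ m) delta 0). apply is_lim_seq_geom. rewrite Rabs_right; lra.
Qed.

Lemma x_lim : is_lim_seq x alpha.
Proof.
  apply is_lim_seq_ext with (fun l => e l + alpha). intros; unfold e; ring.
  replace (Finite alpha) with (Finite (0 + alpha)) by (f_equal; ring).
  apply (is_lim_seq_plus' e (fun _ => alpha) 0 alpha). apply e_lim. apply is_lim_seq_const.
Qed.

Lemma e_eventually eta : 0 < eta -> exists N, forall n, (N <= n)%nat -> Rabs (e n) < eta.
Proof.
  intros He. pose proof e_lim as H. apply is_lim_seq_spec in H. destruct (H (mkposreal eta He)) as [N HN].
  exists N. intros n Hn. specialize (HN n Hn). simpl in HN. rewrite Rminus_0_r in HN. auto.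
Qed.

Lemma e_ne l : e l <> 0.
Proof. unfold e. intro H. apply (Hne l). lra. Qed.

Definition qs l := f (x l) / e l.

Lemma q_lim : is_lim_seq qs (Derive f alpha).
Proof.
  assert (Hder : derivable_pt_lim f alpha (Derive f alpha)).
  { apply is_derive_Reals. apply Derive_correct. apply (Hf 1%nat). }
  apply is_lim_seq_spec. intros eps.
  destruct (Hder eps (cond_pos eps)) as [dl Hdl].
  destruct (e_eventually dl (cond_pos dl)) as [N HN]. exists N. intros n Hn.
  specialize (Hdl (e n) (e_ne n) (HN n Hn)).
  replace (alpha + e n) with (x n) in Hdl by (unfold e; ring). rewrite Hfa, Rminus_0_r in Hdl. exact Hdl.
Qed.

Definition Pn n := prodf s1 (fun k => - f (x (n + k)%nat)).
Definition an n := f (x (n + s1)%nat).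
Definition Rn n := - e (n + S s1)%nat / (Pn n * (an n * an n) / 2).

Lemma fx_ne l : f (x l) <> 0.
Proof. apply (small_facts l (all_small l)). Qed.

Lemma Pn_ne n : Pn n <> 0.
Proof. apply prodf_neq0. intros k Hk Hc. apply (fx_ne (n + k)). lra. Qed.
Lemma an_ne n : an n <> 0.
Proof. apply fx_ne. Qed.

Lemma R_lim : is_lim_seq Rn Ac.
Proof.
  apply is_lim_seq_spec. intros eps0.
  assert (He0 := cond_pos eps0).
  set (mu := Rmin 1 (eps0 / (4 * (Rabs Ac + 1)))).
  assert (HAp : 0 <= Rabs Ac) by apply Rabs_pos.
  assert (Hmu : 0 < mu) by (unfold mu; apply Rmin_pos; [lra|apply Rdiv_lt_0_compat; lra]).
  destruct (pow_small s1 mu Hmu) as [tau [Htau Htau2]].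
  destruct (step_est s1 g r0 Hr0 (HCg (S (S s1))) (eps0 / 4) ltac:(lra)) as [rho [Hrho [Hrho2 Hst]]].
  set (ell := Rabs (Derive f alpha) / 2).
  assert (Hell : 0 < ell) by (unfold ell; assert (0 < Rabs (Derive f alpha)) by (apply Rabs_pos_lt; auto); lra).
  pose proof Lc_pos as HL. pose proof C1_nonneg as HC1.
  set (eta1 := Rmin (rho / Lc) (tau * ell / (Lc * C1 + 1))).
  assert (Heta1 : 0 < eta1) by (unfold eta1; apply Rmin_pos; apply Rdiv_lt_0_compat; try nra).
  destruct (e_eventually eta1 Heta1) as [N1 HN1].
  exists (N1 + S s1)%nat. intros n Hn.
  set (y := fun k => f (x (n + k)%nat)).
  assert (Hy : forall k, (k < S s1)%nat -> Rabs (y k) < rho).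
  { intros k Hk. unfold y. destruct (small_facts (n + k) (all_small _)) as [_ [_ [Hb _]]].
    eapply Rle_lt_trans. apply Hb. fold (e (n + k)%nat).
    assert (Rabs (e (n + k)%nat) < rho / Lc) by (eapply Rlt_le_trans; [apply HN1; lia|apply Rmin_l]).
    apply Rlt_le_trans with (Lc * (rho / Lc)). apply Rmult_lt_compat_l; auto. right; field; lra. }
  destruct (window_step n (fun k _ => all_small (n + k))) as [c [Hint HE]].
  destruct (Hst y c tau ltac:(lra) Hy (inj_window n) Hint) as [_ Hmain].
  cbv zeta in Hmain. unfold y in Hmain. rewrite HE in Hmain.
  assert (Hcond : forall k, (k < s1)%nat -> Rabs (f (x (n + s1)%nat)) <= tau * Rabs (f (x (n + k)%nat))).
  { intros k Hk.
    destruct (small_facts (n + s1) (all_small _)) as [_ [_ [Hb1 _]]].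
    destruct (small_facts (n + k) (all_small _)) as [_ [_ [_ [Hb2 _]]]].
    fold (e (n + s1)%nat) in Hb1. fold (e (n + k)%nat) in Hb2. fold ell in Hb2.
    destruct (dec_step (n - 1)) as [Hd1 _].
    replace (n - 1 + S s1)%nat with (n + s1)%nat in Hd1 by lia.
    assert (Hm : Rabs (e (n - 1 + s1)%nat) <= Rabs (e (n + k)%nat)) by (apply mono_from; lia).
    assert (Hsm : Rabs (e (n - 1 + s1)%nat) < tau * ell / (Lc * C1 + 1)) by (eapply Rlt_le_trans; [apply HN1; lia|apply Rmin_r]).
    assert (H0m : 0 <= Rabs (e (n - 1 + s1)%nat)) by apply Rabs_pos.
    assert (H0k : 0 <= Rabs (e (n + k)%nat)) by apply Rabs_pos.
    eapply Rle_trans. apply Hb1.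
    apply Rle_trans with (Lc * (C1 * Rabs (e (n - 1 + s1)%nat) * Rabs (e (n + k)%nat))).
    apply Rmult_le_compat_l. lra. eapply Rle_trans. apply Hd1. apply Rmult_le_compat_l; auto. apply Rmult_le_pos; auto.
    apply Rle_trans with (tau * (ell * Rabs (e (n + k)%nat))); [|apply Rmult_le_compat_l; lra].
    assert (Lc * C1 * Rabs (e (n - 1 + s1)%nat) <= tau * ell).
    { apply Rle_trans with ((Lc * C1 + 1) * Rabs (e (n - 1 + s1)%nat)). nra.
      apply Rle_trans with ((Lc * C1 + 1) * (tau * ell / (Lc * C1 + 1))). apply Rmult_le_compat_l. nra. lra.
      right. field. nra. }
    nra. }
  specialize (Hmain Hcond).
  fold (Pn n) in Hmain. fold (an n) in Hmain.
  assert (HP : Pn n <> 0) by apply Pn_ne. assert (Ha : an n <> 0) by apply an_ne.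
  assert (Hden : 0 < Rabs (Pn n) * (an n * an n) / 2).
  { assert (0 < Rabs (Pn n)) by (apply Rabs_pos_lt; auto). assert (0 < an n * an n) by (rewrite <- sq_abs; assert (0 < Rabs (an n)) by (apply Rabs_pos_lt; auto); nra). 
    apply Rdiv_lt_0_compat; [apply Rmult_lt_0_compat|]; lra. }
  assert (Hbnd : (eps0 / 4 * (1 + tau) ^ s1 + Rabs Ac * ((1 + tau) ^ s1 - 1)) < eps0).
  { assert (Hmu1 : mu <= 1) by apply Rmin_l.
    assert (Hmu2 : mu <= eps0 / (4 * (Rabs Ac + 1))) by apply Rmin_r.
    assert (Hp0 : 0 <= (1 + tau) ^ s1 - 1) by (pose proof (pow_R1_Rle (1 + tau) s1 ltac:(lra)); lra).
    assert (Rabs Ac * ((1 + tau) ^ s1 - 1) <= eps0 / 4).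
    { apply Rle_trans with ((Rabs Ac + 1) * mu). apply Rmult_le_compat; lra.
      apply Rle_trans with ((Rabs Ac + 1) * (eps0 / (4 * (Rabs Ac + 1)))). apply Rmult_le_compat_l; lra.
      right. field. lra. }
    assert (eps0 / 4 * (1 + tau) ^ s1 <= eps0 / 2) by nra.
    lra. }
  unfold Rn.
  replace (- e (n + S s1)%nat / (Pn n * (an n * an n) / 2) - Ac) with ((- e (n + S s1)%nat - Ac * Pn n * (an n * an n) / 2) / (Pn n * (an n * an n) / 2)).
  2: { field. split; auto. }
  unfold Rdiv at 1. rewrite Rabs_mult, Rabs_inv.
  replace (Rabs (Pn n * (an n * an n) / 2)) with (Rabs (Pn n) * (an n * an n) / 2).
  2: { unfold Rdiv. rewrite !Rabs_mult. rewrite (Rabs_right (/ 2)) by lra. rewrite sq_abs. ring. }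
  apply (Rmult_lt_reg_r (Rabs (Pn n) * (an n * an n) / 2)); auto.
  rewrite Rmult_assoc, Rinv_l by lra. rewrite Rmult_1_r.
  eapply Rle_lt_trans. apply Hmain.
  fold Ac. assert (Hfin := Rmult_lt_compat_r _ _ _ Hden Hbnd).
  set (X := eps0 / 4 * (1 + tau) ^ s1 + Rabs Ac * ((1 + tau) ^ s1 - 1)) in *.
  set (Y := Rabs (Pn n)) in *. set (Z := an n * an n) in *.
  replace (X * Y * Z / 2) with (X * (Y * Z / 2)) by field. exact Hfin.
Qed.
Definition Ys l := ln (Rabs (e l)).

Lemma ln_prodf m u : (forall k, (k < m)%nat -> u k <> 0) -> ln (Rabs (prodf m u)) = ssum m (fun k => ln (Rabs (u k))).
Proof.
  induction m as [|m IH]; intros H; simpl.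
  - rewrite Rabs_R1, ln_1. reflexivity.
  - rewrite Rabs_mult, ln_mult. rewrite IH. reflexivity. intros; apply H; lia.
    apply Rabs_pos_lt. apply prodf_neq0. intros; apply H; lia.
    apply Rabs_pos_lt. apply H; lia.
Qed.

Lemma ln_fx l : ln (Rabs (f (x l))) = ln (Rabs (qs l)) + Ys l.
Proof.
  unfold Ys, qs. replace (f (x l)) with (f (x l) / e l * e l) at 1 by (field; apply e_ne).
  rewrite Rabs_mult, ln_mult. reflexivity.
  apply Rabs_pos_lt. unfold Rdiv. apply Rmult_integral_contrapositive_currified. apply fx_ne. apply Rinv_neq_0_compat, e_ne.
  apply Rabs_pos_lt, e_ne.
Qed.

Lemma log_id n : Ys (n + S s1) - 2 * Ys (n + s1) - ssum s1 (fun k => Ys (n + k)%nat) =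
  ln (Rabs (Rn n)) - ln 2 + ssum s1 (fun k => ln (Rabs (qs (n + k)%nat))) + 2 * ln (Rabs (qs (n + s1)%nat)).
Proof.
  assert (HP := Pn_ne n). assert (Ha := an_ne n).
  assert (HR : Rn n <> 0).
  { unfold Rn. unfold Rdiv. apply Rmult_integral_contrapositive_currified. apply Ropp_neq_0_compat, e_ne.
    apply Rinv_neq_0_compat. apply Rmult_integral_contrapositive_currified; [apply Rmult_integral_contrapositive_currified; auto; apply Rmult_integral_contrapositive_currified; auto|lra]. }
  assert (He : e (n + S s1)%nat = Rn n * (- Pn n) * an n * an n * / 2) by (unfold Rn; field; split; auto).
  assert (HY : Ys (n + S s1) = ln (Rabs (Rn n)) + ln (Rabs (Pn n)) + ln (Rabs (an n)) + ln (Rabs (an n)) - ln 2).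
  { unfold Ys. rewrite He. rewrite !Rabs_mult, Rabs_Ropp, Rabs_inv, (Rabs_right 2) by lra.
    rewrite !ln_mult; try apply Rabs_pos_lt; auto; try (apply Rinv_0_lt_compat; lra);
      try (repeat apply Rmult_lt_0_compat; apply Rabs_pos_lt; auto).
    rewrite ln_Rinv by lra. ring. }
  rewrite HY. unfold Pn. rewrite ln_prodf.
  2: { intros k Hk Hc. apply (fx_ne (n + k)). lra. }
  rewrite (ssum_ext s1 (fun k => ln (Rabs (- f (x (n + k)%nat)))) (fun k => ln (Rabs (qs (n + k)%nat)) + Ys (n + k)%nat)).
  2: { intros k Hk. rewrite Rabs_Ropp. apply ln_fx. }
  rewrite ssum_plus. unfold an. rewrite ln_fx. ring.
Qed.

Definition pp := pseq (S s1).
Definition bw i := if Nat.ltb i s1 then Tg (S i) pp else 1.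
Definition zs n := Ys (S n) - pp * Ys n.

Lemma level n : ssum (S s1) (fun i => bw i * zs (n + i)%nat) = Ys (n + S s1) - 2 * Ys (n + s1) - ssum s1 (fun k => Ys (n + k)%nat).
Proof.
  destruct (pseq_props s1) as [Hp2 [_ [_ [_ [_ [HT _]]]]]]. fold pp in Hp2, HT.
  rewrite ssum_S.
  rewrite (ssum_ext s1 (fun i => bw i * zs (n + i)%nat) (fun i => Tg (S i) pp * (Ys (n + i + 1)%nat - pp * Ys (n + i)%nat))).
  2: { intros i Hi. unfold bw, zs. replace (Nat.ltb i s1) with true by (symmetry; apply Nat.ltb_lt; auto).
       replace (S (n + i)) with (n + i + 1)%nat by lia. reflexivity. }
  rewrite Y_identity by lra. unfold bw, zs. rewrite Nat.ltb_irrefl. rewrite HT.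
  replace (S (n + s1)) with (n + S s1)%nat by lia. ring.
Qed.

Lemma ln_abs_cont a : a <> 0 -> continuity_pt (fun t => ln (Rabs t)) a.
Proof.
  intros Ha. apply (continuity_pt_comp Rabs ln a). apply Rcontinuity_abs.
  apply derivable_continuous_pt. exists (/ Rabs a). apply derivable_pt_lim_ln. apply Rabs_pos_lt; auto.
Qed.

Definition Llim := ln (Rabs Ac) - ln 2 + ssum s1 (fun _ => ln (Rabs (Derive f alpha))) + 2 * ln (Rabs (Derive f alpha)).

Lemma cs_lim : is_lim_seq (fun n => ln (Rabs (Rn n)) - ln 2 + ssum s1 (fun k => ln (Rabs (qs (n + k)%nat))) + 2 * ln (Rabs (qs (n + s1)%nat))) Llim.
Proof.
  assert (Hq : forall k, is_lim_seq (fun n => ln (Rabs (qs (n + k)%nat))) (ln (Rabs (Derive f alpha)))).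
  { intros k. apply (is_lim_seq_continuous (fun t => ln (Rabs t)) (fun n => qs (n + k)%nat)). apply ln_abs_cont; auto.
    apply (is_lim_seq_incr_n qs k). apply q_lim. }
  unfold Llim. apply is_lim_seq_plus'. apply is_lim_seq_plus'. apply is_lim_seq_minus'.
  - apply (is_lim_seq_continuous (fun t => ln (Rabs t)) Rn). apply ln_abs_cont; auto. apply R_lim.
  - apply is_lim_seq_const.
  - apply (is_lim_seq_ssum s1 (fun k n => ln (Rabs (qs (n + k)%nat))) (fun _ => ln (Rabs (Derive f alpha)))). intros; apply Hq.
  - apply (is_lim_seq_scal_l (fun n => ln (Rabs (qs (n + s1)%nat))) 2 (ln (Rabs (Derive f alpha)))). apply Hq.
Qed.
Lemma zs_lim : exists Lz : R, is_lim_seq zs Lz.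
Proof.
  destruct (pseq_props s1) as [Hp2 [HpP [_ [_ [_ [HT _]]]]]]. fold pp in Hp2, HpP, HT.
  pose proof sqrt5_bounds. assert (Hp3 : pp < 3) by (unfold Phi in HpP; lra).
  set (lam := Rmin (/ pp ^ (S s1)) (3 - pp)).
  assert (Hpow : forall m, (m <= S s1)%nat -> / pp ^ (S s1) <= / pp ^ m).
  { intros m Hm. apply Rinv_le_contravar. apply pow_lt; lra. apply Rle_pow; lra || lia. }
  exists (Llim / ssum (S s1) bw).
  apply (stability s1 bw zs (fun n => ln (Rabs (Rn n)) - ln 2 + ssum s1 (fun k => ln (Rabs (qs (n + k)%nat))) + 2 * ln (Rabs (qs (n + s1)%nat))) lam).
  - unfold bw. rewrite Nat.ltb_irrefl. auto.
  - apply Rmin_pos. apply Rinv_0_lt_compat, pow_lt; lra. lra.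
  - unfold bw. destruct s1 as [|s1'] eqn:Es.
    + simpl. unfold lam. eapply Rle_trans. apply Rmin_r. lra.
    + simpl Nat.ltb. unfold lam. eapply Rle_trans. apply Rmin_l. simpl Tg.
      replace (0 + / (pp * 1)) with (/ pp ^ 1) by (simpl; ring). apply Hpow. lia.
  - intros i Hi. unfold bw. replace (Nat.ltb i s1) with true by (symmetry; apply Nat.ltb_lt; auto).
    destruct (Nat.ltb (S i) s1) eqn:Hb.
    + apply Nat.ltb_lt in Hb. change (Tg (S (S i)) pp) with (Tg (S i) pp + / pp ^ (S (S i))).
      unfold lam. eapply Rle_trans. apply Rmin_l. replace (Tg (S i) pp + / pp ^ S (S i) - Tg (S i) pp) with (/ pp ^ S (S i)) by ring.
      apply Hpow. lia.
    + apply Nat.ltb_ge in Hb. replace (S i) with s1 by lia. rewrite HT. unfold lam. eapply Rle_trans. apply Rmin_r. lra.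
  - intros n. rewrite level. apply log_id.
  - apply cs_lim.
Qed.

Theorem rate : has_convergence_rate x alpha pp.
Proof.
  destruct zs_lim as [Lz HLz].
  split. apply x_lim.
  exists (exp Lz). split. apply exp_pos.
  apply is_lim_seq_ext with (fun l => exp (zs l)).
  - intros l. unfold zs, Ys, Rpower. fold (e (S l)). fold (e l).
    rewrite Rmult_comm. unfold Rminus. rewrite exp_plus, exp_ln. 2: apply Rabs_pos_lt, e_ne.
    rewrite exp_Ropp. unfold Rdiv. reflexivity.
  - apply (is_lim_seq_continuous exp zs Lz). apply derivable_continuous_pt, derivable_pt_exp. exact HLz.
Qed.
End Conv.

Theorem corollary2 :
  exists p : nat -> R,
    (forall s : nat, (1 <= s)%nat ->
       rate_poly s (p s) = 0 /\ (forall q : R, rate_poly s q = 0 -> q <= p s)) /\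
    (forall s : nat, (1 <= s)%nat -> p s < (3 + sqrt 5) / 2) /\
    (forall s : nat, (1 <= s)%nat -> p s < p (S s)) /\
    is_lim_seq p ((3 + sqrt 5) / 2) /\
    (forall (s : nat) (f : R -> R) (alpha : R),
       (1 <= s)%nat -> smooth f -> f alpha = 0 -> Derive f alpha <> 0 ->
       inverse_nondegenerate f alpha s ->
       exists delta : R, 0 < delta /\
         forall x : nat -> R,
           AB_sequence f s x ->
           (forall k : nat, (k < s)%nat -> Rabs (x k - alpha) < delta) ->
           (forall l : nat, x l <> alpha) ->
           (forall n i j : nat, (i < j)%nat -> (j < s)%nat ->
              f (x (n + i)%nat) <> f (x (n + j)%nat)) ->
           has_convergence_rate x alpha (p s)).
Proof.
  exists pseq. split; [|split; [|split; [|split]]].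
  - intros s Hs. destruct s as [|s1]. lia.
    destruct (pseq_props s1) as [_ [_ [H1 [_ [H2 _]]]]]. split; auto.
  - intros s Hs. destruct s as [|s1]. lia.
    destruct (pseq_props s1) as [_ [H _]]. exact H.
  - intros s Hs. destruct s as [|s1]. lia. apply pseq_mono.
  - apply pseq_lim.
  - intros s f alpha Hs Hf Hfa Hd Hnd. destruct s as [|s1]. lia.
    destruct Hnd as [g [r [Hr [Hg0 [Hg Hnd]]]]].
    destruct (g_setup f alpha g r Hf Hfa Hd Hr Hg0 Hg) as [rI [r0 [HrI [Hr0 [Hr0r [Hdb [Hnz [Hinj [HgI [HCg [HDg Hgf]]]]]]]]]]].
    assert (HA : Ac s1 g <> 0).
    { unfold Ac. rewrite (Derive_n_comp g (S s1) 1). rewrite Nat.add_1_r.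
      unfold Rdiv. apply Rmult_integral_contrapositive_currified; auto.
      apply Rinv_neq_0_compat, INR_fact_neq_0. }
    destruct (step_est s1 g r0 Hr0 (HCg (S (S s1))) 1 ltac:(lra)) as [rho1 [Hrho1 [Hrho1b Hst]]].
    assert (Hstep : forall (y : nat -> R) c tau, 0 <= tau -> (forall k, (k < S s1)%nat -> Rabs (y k) < rho1) ->
      (forall i j, (i < S s1)%nat -> (j < S s1)%nat -> i <> j -> y i <> y j) ->
      (forall k, (k < S s1)%nat -> Derive (poly_eval c (S s1)) (y k) = Derive g (y k)) ->
      Rabs ((g 0 - poly_eval c (S s1) 0) - (g (y s1) - poly_eval c (S s1) (y s1))) <=
        (Rabs (Ac s1 g) + 1) * (2 * rho1) ^ s1 * (y s1 * y s1) / 2).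
    { intros y c tau Ht Hy Hi Hint. destruct (Hst y c tau Ht Hy Hi Hint) as [H _]. exact H. }
    exists (delta s1 f g alpha rI rho1). split.
    + apply (delta_pos s1 f g alpha rI rho1 Hd HrI Hrho1).
    + intros x Hab Hinit Hne Hdist.
      exact (rate s1 f g alpha rI r0 rho1 Hf Hfa Hd HrI Hr0 Hdb HCg HDg Hgf Hg0 Hrho1 Hrho1b HA Hstep x Hab Hinit Hne Hdist).
Qed.
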